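(* Let $g\ge1$ and $n\in\mathbb{Z}\setminus\{0\}$. Let $u_1,\dots,u_{2g+1}$ be pairwise distinct complex numbers varying in a small open set. Let $\gamma_1,\dots,\gamma_{2g}$ be a basis of the first homology of the curve $v^2=(u-u_1)\cdots(u-u_{2g+1})$, represented by cycles avoiding the branch points and infinity and transported continuously as the $u_j$ vary. Let $c_1,\dots,c_{2g}\in\mathbb{C}$ be arbitrary constants, and set $$a_i=\sum_{k=1}^{2g}c_k\oint_{\gamma_k}\frac{v^n\,du}{u-u_i},\qquad A^{(i)}=\begin{pmatrix} n/4 & a_i\\ 0 & -n/4\end{pmatrix},\qquad i=1,\dots,2g+1.$$ Then the matrices $A^{(i)}$ satisfy the Schlesinger system $$\frac{\partial A^{(j)}}{\partial u_k}=\frac{[A^{(k)},A^{(j)}]}{u_k-u_j}\ (k\ne j),\qquad \frac{\partial A^{(k)}}{\partial u_k}=-\sum_{j\neq k}\frac{[A^{(k)},A^{(j)}]}{u_k-u_j},$$ and $A^{(\infty)}:=-A^{(1)}-\dots-A^{(2g+1)}$ is constant. *)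

(* Defs.v *)
From Stdlib Require Import Reals ZArith Arith.
From Coquelicot Require Import Coquelicot.
Open Scope C_scope.

Definition zpowC (z : C) (n : Z) : C :=
  match n with
  | Z0 => RtoC 1
  | Zpos p => pow_n (K:=C_Ring) z (Pos.to_nat p)
  | Zneg p => / pow_n (K:=C_Ring) z (Pos.to_nat p)
  end.

Fixpoint sumC (m : nat) (f : nat -> C) : C :=
  match m with O => RtoC 0 | S m' => sumC m' f + f m' end.

Definition upd (u : nat -> C) (k : nat) (z : C) : nat -> C :=
  fun i => if Nat.eqb i k then z else u i.

Definition branchpoly (N : nat) (u : nat -> C) (x : C) : C :=
  let fix pr (m : nat) : C := match m with O => RtoC 1 | S m' => pr m' * (x - u m') end in pr N.

(* open subset of C^N (only the first N coordinates matter) *)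
Definition openN (N : nat) (U : (nat -> C) -> Prop) : Prop :=
  forall u, U u -> exists eps : R, (0 < eps)%R /\
    forall u', (forall i, (i < N)%nat -> (Cmod (u' i - u i) < eps)%R) -> U u'.

Record mat2 := Mat2 { m11 : C; m12 : C; m21 : C; m22 : C }.

Definition mmul (A B : mat2) : mat2 :=
  Mat2 (m11 A * m11 B + m12 A * m21 B) (m11 A * m12 B + m12 A * m22 B)
       (m21 A * m11 B + m22 A * m21 B) (m21 A * m12 B + m22 A * m22 B).
Definition madd (A B : mat2) : mat2 :=
  Mat2 (m11 A + m11 B) (m12 A + m12 B) (m21 A + m21 B) (m22 A + m22 B).
Definition mscale (c : C) (A : mat2) : mat2 :=
  Mat2 (c * m11 A) (c * m12 A) (c * m21 A) (c * m22 A).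
Definition mopp (A : mat2) : mat2 := mscale (RtoC (-1)) A.
Definition mzero : mat2 := Mat2 (RtoC 0) (RtoC 0) (RtoC 0) (RtoC 0).
Definition comm (A B : mat2) : mat2 := madd (mmul A B) (mopp (mmul B A)).
Fixpoint msum (m : nat) (f : nat -> mat2) : mat2 :=
  match m with O => mzero | S m' => madd (msum m' f) (f m') end.

Definition mderiv (F : C -> mat2) (z : C) (D : mat2) : Prop :=
  is_derive (K:=C_AbsRing) (V:=C_NormedModule) (fun w => m11 (F w)) z (m11 D) /\
  is_derive (K:=C_AbsRing) (V:=C_NormedModule) (fun w => m12 (F w)) z (m12 D) /\
  is_derive (K:=C_AbsRing) (V:=C_NormedModule) (fun w => m21 (F w)) z (m21 D) /\
  is_derive (K:=C_AbsRing) (V:=C_NormedModule) (fun w => m22 (F w)) z (m22 D).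

(* the contour integral over a closed cycle on the curve v^2 = prod (u - u_i):
   the cycle is t |-> (sigma t, V t), t in [0,1], sigma' = dsigma *)
Definition cyc_int (sigma dsigma : R -> C) (V : R -> C) (h : C -> C -> C) : C :=
  RInt (V:=C_R_CompleteNormedModule) (fun t => h (sigma t) (V t) * dsigma t) 0 1.

Definition a_coef (g : nat) (n : Z) (c : nat -> C) (sigma dsigma : nat -> R -> C)
  (V : nat -> (nat -> C) -> R -> C) (u : nat -> C) (i : nat) : C :=
  sumC (2 * g) (fun k => c k *
    cyc_int (sigma k) (dsigma k) (V k u) (fun x v => zpowC v n / (x - u i))).

Definition Amat (g : nat) (n : Z) (c : nat -> C) (sigma dsigma : nat -> R -> C)
  (V : nat -> (nat -> C) -> R -> C) (u : nat -> C) (i : nat) : mat2 :=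
  Mat2 (RtoC (IZR n / 4)%R) (a_coef g n c sigma dsigma V u i) (RtoC 0) (RtoC (- (IZR n / 4))%R).

Definition Ainf (g : nat) (n : Z) (c : nat -> C) (sigma dsigma : nat -> R -> C)
  (V : nat -> (nat -> C) -> R -> C) (u : nat -> C) : mat2 :=
  mopp (msum (2 * g + 1) (Amat g n c sigma dsigma V u)).

(* Main.v *)
Require Import Defs.
From Stdlib Require Import Reals ZArith Arith Lra Lia Ranalysis5.
From Coquelicot Require Import Coquelicot.
From Stdlib Require Import FunctionalExtensionality.
Open Scope C_scope.

Lemma nR x : @norm R_AbsRing R_NormedModule x = Rabs x. reflexivity. Qed.
Lemma normCR_eq (z : C) : @norm R_AbsRing C_R_NormedModule z = Cmod z.
Proof. unfold norm at 1. simpl. unfold prod_norm. rewrite !nR. unfold Cmod. simpl. rewrite !Rmult_1_r, <- !Rabs_mult, !Rabs_right; try reflexivity; apply Rle_ge, Rle_0_sqr. Qed.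

Lemma normCR_le (z : C) : @norm R_AbsRing C_R_NormedModule z <= Cmod z.
Proof. rewrite normCR_eq; lra. Qed.

Definition ccont (f : R -> C) (t : R) := forall eps, 0 < eps -> exists d, 0 < d /\
  forall t', Rabs (t' - t) < d -> Cmod (f t' - f t) < eps.

Lemma ccont_continuous (f : R -> C) t : ccont f t -> @continuous R_UniformSpace C_R_NormedModule f t.
Proof.
  intros H. unfold continuous. apply filterlim_locally. intros eps.
  destruct (H eps (cond_pos eps)) as [d [Hd Hf]].
  exists (mkposreal d Hd). intros y Hy. apply norm_compat1.
  eapply Rle_lt_trans. apply normCR_le. apply Hf. exact Hy.
Qed.

Lemma Cmod_rev (a b : C) : Cmod a - Cmod b <= Cmod (a - b).
Proof.
  assert (a = (a - b) + b) by ring. rewrite H at 1.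
  pose proof (Cmod_triangle (a - b) b). lra.
Qed.

Lemma Cmod_sym (a b : C) : Cmod (a - b) = Cmod (b - a).
Proof. rewrite <- Cmod_opp. f_equal. ring. Qed.

Lemma Cmod_mult_le (a b A B : R) (x y : C) : Cmod x <= A -> Cmod y <= B -> Cmod (x * y) <= A * B.
Proof. intros. rewrite Cmod_mult. apply Rmult_le_compat; auto using Cmod_ge_0. Qed.

Lemma ccont_const c t : ccont (fun _ => c) t.
Proof. intros e He. exists 1%R. split. lra. intros. replace (c - c) with (RtoC 0) by ring. rewrite Cmod_0. lra. Qed.

Lemma ccont_plus (f g : R -> C) t : ccont f t -> ccont g t -> ccont (fun x => f x + g x) t.
Proof.
  intros Hf Hg e He. destruct (Hf (e/2)%R) as [d1 [Hd1 H1]]. lra.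
  destruct (Hg (e/2)%R) as [d2 [Hd2 H2]]. lra.
  exists (Rmin d1 d2). split. apply Rmin_pos; auto. intros t' Ht.
  replace (f t' + g t' - (f t + g t)) with ((f t' - f t) + (g t' - g t)) by ring.
  eapply Rle_lt_trans. apply Cmod_triangle.
  assert (Cmod (f t' - f t) < e/2)%R by (apply H1; eapply Rlt_le_trans; [exact Ht| apply Rmin_l]).
  assert (Cmod (g t' - g t) < e/2)%R by (apply H2; eapply Rlt_le_trans; [exact Ht| apply Rmin_r]).
  lra.
Qed.

Lemma ccont_opp (f : R -> C) t : ccont f t -> ccont (fun x => - f x) t.
Proof.
  intros Hf e He. destruct (Hf e He) as [d [Hd H]]. exists d. split; auto. intros.
  replace (- f t' - - f t) with (- (f t' - f t)) by ring. rewrite Cmod_opp. auto.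
Qed.

Lemma ccont_minus (f g : R -> C) t : ccont f t -> ccont g t -> ccont (fun x => f x - g x) t.
Proof. intros. apply ccont_plus; auto. apply ccont_opp; auto. Qed.

Lemma ccont_mult (f g : R -> C) t : ccont f t -> ccont g t -> ccont (fun x => f x * g x) t.
Proof.
  intros Hf Hg e He.
  set (A := (Cmod (f t) + 1)%R). set (B := (Cmod (g t) + 1)%R).
  assert (HA : 0 < A) by (unfold A; pose proof (Cmod_ge_0 (f t)); lra).
  assert (HB : 0 < B) by (unfold B; pose proof (Cmod_ge_0 (g t)); lra).
  destruct (Hf (e / (2 * B))%R) as [d1 [Hd1 H1]]. apply Rdiv_lt_0_compat; lra.
  destruct (Hg (Rmin 1 (e / (2 * A)))%R) as [d2 [Hd2 H2]]. apply Rmin_pos. lra. apply Rdiv_lt_0_compat; lra.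
  exists (Rmin d1 d2). split. apply Rmin_pos; auto. intros t' Ht.
  assert (E1 : Cmod (f t' - f t) < e / (2 * B)) by (apply H1; eapply Rlt_le_trans; [exact Ht| apply Rmin_l]).
  assert (E2 : Cmod (g t' - g t) < Rmin 1 (e / (2 * A))) by (apply H2; eapply Rlt_le_trans; [exact Ht| apply Rmin_r]).
  replace (f t' * g t' - f t * g t) with ((f t' - f t) * g t' + f t * (g t' - g t)) by ring.
  eapply Rle_lt_trans. apply Cmod_triangle. rewrite !Cmod_mult.
  assert (Cmod (g t') <= B).
  { unfold B. pose proof (Cmod_rev (g t') (g t)). pose proof (Rmin_l 1 (e / (2 * A))). lra. }
  assert (Cmod (f t' - f t) * Cmod (g t') <= e / (2 * B) * B).
  { apply Rmult_le_compat; auto using Cmod_ge_0. lra. }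
  assert (Cmod (f t) * Cmod (g t' - g t) <= A * (e / (2 * A))).
  { apply Rmult_le_compat; auto using Cmod_ge_0. unfold A; lra. pose proof (Rmin_r 1 (e / (2 * A))). lra. }
  replace (e / (2 * B) * B)%R with (e/2)%R in H0 by (field; lra).
  replace (A * (e / (2 * A)))%R with (e/2)%R in H3 by (field; lra).
  assert (Cmod (f t') > 0 \/ True) by auto.
  destruct (Req_dec (Cmod (f t' - f t)) 0).
  - assert (Cmod (f t) * Cmod (g t' - g t) < e)%R.
    { destruct (Req_dec (Cmod (f t)) 0). rewrite H6. lra.
      apply Rle_lt_trans with (A * Cmod (g t' - g t))%R. apply Rmult_le_compat_r. apply Cmod_ge_0. unfold A; lra.
      apply Rlt_le_trans with (A * (e / (2*A)))%R. apply Rmult_lt_compat_l. lra.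
      pose proof (Rmin_r 1 (e / (2 * A))). lra. replace (A * (e / (2*A)))%R with (e/2)%R by (field; lra); lra. }
    rewrite H5. lra.
  - assert (Cmod (f t' - f t) * Cmod (g t') < e / 2)%R.
    { apply Rle_lt_trans with (Cmod (f t' - f t) * B)%R. apply Rmult_le_compat_l. apply Cmod_ge_0. auto.
      apply Rlt_le_trans with (e / (2*B) * B)%R. apply Rmult_lt_compat_r; lra. right; field; lra. }
    lra.
Qed.

Lemma ccont_inv (f : R -> C) t : f t <> 0 -> ccont f t -> ccont (fun x => / f x) t.
Proof.
  intros Hn Hf e He. pose proof (proj1 (Cmod_gt_0 _) Hn) as Hp. set (m := Cmod (f t)) in *.
  destruct (Hf (Rmin (m/2) (e * m * m / 2))%R) as [d [Hd H]].
  apply Rmin_pos. lra. apply Rdiv_lt_0_compat. apply Rmult_lt_0_compat. apply Rmult_lt_0_compat; lra. lra. lra.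
  exists d. split; auto. intros t' Ht. specialize (H t' Ht).
  pose proof (Rmin_l (m/2) (e * m * m / 2)). pose proof (Rmin_r (m/2) (e * m * m / 2)).
  assert (Hm' : m / 2 <= Cmod (f t')).
  { pose proof (Cmod_rev (f t) (f t')). rewrite Cmod_sym in H2. unfold m in *. lra. }
  assert (Hn' : f t' <> 0). { intro E. rewrite E, Cmod_0 in Hm'. lra. }
  replace (/ f t' - / f t) with ((f t - f t') / (f t' * f t)) by (field; auto).
  rewrite Cmod_div by (apply Cmult_neq_0; auto). rewrite Cmod_mult. rewrite Cmod_sym.
  fold m. apply Rlt_le_trans with ((e * m * m / 2) / (m / 2 * m))%R.
  - unfold Rdiv at 1. apply Rle_lt_trans with (Cmod (f t' - f t) * / (m/2 * m))%R.
    apply Rmult_le_compat_l. apply Cmod_ge_0. apply Rinv_le_contravar. apply Rmult_lt_0_compat; lra.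
    apply Rmult_le_compat_r; lra.
    apply Rmult_lt_compat_r. apply Rinv_0_lt_compat, Rmult_lt_0_compat; lra. lra.
  - right. field. lra.
Qed.

Lemma continuous_ccont (f : R -> C) t : @continuous R_UniformSpace C_R_NormedModule f t -> ccont f t.
Proof.
  intros H e He. unfold continuous in H. rewrite filterlim_locally in H.
  assert (Hp : 0 < e / (@norm_factor R_AbsRing C_R_NormedModule)).
  { apply Rdiv_lt_0_compat; auto. apply norm_factor_gt_0. }
  destruct (H (mkposreal _ Hp)) as [d Hd]. exists d. split. apply cond_pos.
  intros t' Ht. specialize (Hd t' Ht). apply norm_compat2 in Hd. rewrite normCR_eq in Hd.
  simpl in Hd. replace (norm_factor * (e / norm_factor))%R with e in Hd. exact Hd.
  field. apply Rgt_not_eq, norm_factor_gt_0.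
Qed.

Notation pw z k := (@pow_n C_Ring z k : C).

Lemma pown_S (z : C) k : pw z (S k) = z * pw z k.
Proof. reflexivity. Qed.
Lemma pown_O (z : C) : pw z O = 1.
Proof. reflexivity. Qed.

Lemma pown_mult (x y : C) k : pw (x * y) k = pw x k * pw y k.
Proof. induction k. rewrite !pown_O; ring. rewrite !pown_S, IHk; ring. Qed.

Lemma pown_nz (x : C) k : x <> 0 -> pw x k <> 0.
Proof. intros H. induction k. rewrite pown_O. apply C1_nz. rewrite pown_S. apply Cmult_neq_0; auto. Qed.

Lemma Cinv_nz (x : C) : x <> 0 -> / x <> 0.
Proof. intros H E. apply C1_nz. rewrite <- (Cinv_r x H), E. ring. Qed.

Lemma zpowC_nz (x : C) p : x <> 0 -> zpowC x p <> 0.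
Proof.
  intros H. destruct p; simpl. apply C1_nz. apply pown_nz; auto.
  apply Cinv_nz. apply pown_nz; auto.
Qed.

Lemma zpowC_mult (x y : C) p : x <> 0 -> y <> 0 -> zpowC (x * y) p = zpowC x p * zpowC y p.
Proof.
  intros Hx Hy. destruct p; simpl. ring. apply pown_mult.
  rewrite pown_mult. field. split; apply pown_nz; auto.
Qed.

Lemma zpowC_succ (x : C) p : x <> 0 -> zpowC x (p + 1) = zpowC x p * x.
Proof.
  intros Hx. destruct p as [|q|q].
  - simpl. change (x * 1 = 1 * x). ring.
  - replace (Z.pos q + 1)%Z with (Z.pos (Pos.succ q)) by lia. unfold zpowC.
    rewrite Pos2Nat.inj_succ. rewrite pown_S. ring.
  - destruct (Pos.eq_dec q 1) as [->|Hq].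
    + simpl. change (RtoC 1 = / (x * 1) * x). field. auto.
    + assert (Z.neg q + 1 = Z.neg (Pos.pred q))%Z.
      { rewrite <- (Pos.succ_pred q) at 1 by auto. rewrite <- Pos.add_1_r. lia. }
      rewrite H. unfold zpowC.
      replace (Pos.to_nat q) with (S (Pos.to_nat (Pos.pred q))).
      rewrite pown_S. field. split; auto. apply pown_nz; auto.
      rewrite <- (Pos.succ_pred q) at 2 by auto. rewrite Pos2Nat.inj_succ. reflexivity.
Qed.

Lemma zpowC_m2 (x : C) p : x <> 0 -> zpowC x (p - 2) = zpowC x p / (x * x).
Proof.
  intros Hx. assert (E : zpowC x p = zpowC x (p - 2) * x * x).
  { replace p with (p - 2 + 1 + 1)%Z at 1 by lia. rewrite !zpowC_succ; auto. }
  rewrite E. field. auto.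
Qed.

Lemma ccont_pown (f : R -> C) t k : ccont f t -> ccont (fun x => pw (f x) k) t.
Proof.
  intros H. induction k. apply (ccont_const (RtoC 1)).
  apply (ccont_mult f (fun x => pw (f x) k)); auto.
Qed.

Lemma ccont_zpowC (f : R -> C) t p : f t <> 0 -> ccont f t -> ccont (fun x => zpowC (f x) p) t.
Proof.
  intros Hn H. destruct p; simpl. apply (ccont_const (RtoC 1)). apply ccont_pown; auto.
  apply (ccont_inv (fun x => pw (f x) (Pos.to_nat p))). apply pown_nz; auto.
  apply ccont_pown; auto.
Qed.

Lemma pown_exp (q : nat) : exists B, 0 < B /\ forall e : C, Cmod e <= 1/2 ->
  Cmod (pw (1+e) q - 1 - INR q * e) <= B * Cmod e ^ 2 /\
  Cmod (pw (1+e) q - 1) <= B * Cmod e /\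
  / B <= Cmod (pw (1+e) q) /\ Cmod (pw (1+e) q) <= B.
Proof.
  induction q.
  - exists 1%R. split. lra. intros e He. rewrite pown_O. simpl.
    replace (1 - 1 - 0 * e) with (RtoC 0) by ring. replace (1 - 1) with (RtoC 0) by ring.
    rewrite Cmod_0, Cmod_1. pose proof (Cmod_ge_0 e). repeat split; try nra; rewrite ?Rinv_1; lra.
  - destruct IHq as [B [HB H]]. exists (2 * B + INR q + 1)%R.
    pose proof (pos_INR q) as Hq. split. lra. intros e He. destruct (H e He) as [H1 [H2 [H3 H4]]].
    set (P := pw (1+e) q) in *. rewrite pown_S. fold P.
    assert (E1 : Cmod (1 + e) <= 3/2). { pose proof (Cmod_triangle 1 e). rewrite Cmod_1 in H0. lra. }
    assert (E2 : 1/2 <= Cmod (1 + e)). { pose proof (Cmod_rev 1 (-e)). rewrite Cmod_1, Cmod_opp in H0.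
      replace (1 - - e) with (1 + e) in H0 by ring. lra. }
    pose proof (Cmod_ge_0 e) as He0.
    repeat split.
    + replace ((1 + e) * P - 1 - INR (S q) * e) with ((1 + e) * (P - 1 - INR q * e) + INR q * (e * e))
        by (rewrite S_INR, RtoC_plus; ring).
      eapply Rle_trans. apply Cmod_triangle. rewrite !Cmod_mult, Cmod_R, Rabs_right by lra.
      assert (Cmod (1 + e) * Cmod (P - 1 - INR q * e) <= 3/2 * (B * Cmod e ^ 2)).
      { apply Rmult_le_compat; auto using Cmod_ge_0. }
      nra.
    + replace ((1 + e) * P - 1) with ((1 + e) * (P - 1) + e) by ring.
      eapply Rle_trans. apply Cmod_triangle. rewrite !Cmod_mult.
      assert (Cmod (1 + e) * Cmod (P - 1) <= 3/2 * (B * Cmod e)).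
      { apply Rmult_le_compat; auto using Cmod_ge_0. }
      nra.
    + rewrite Cmod_mult. apply Rle_trans with (1/2 * / B)%R.
      * apply Rle_trans with (/ (2 * B))%R. apply Rinv_le_contravar; lra. rewrite Rinv_mult. lra.
      * apply Rmult_le_compat; try lra. apply Rlt_le, Rinv_0_lt_compat; lra.
    + rewrite Cmod_mult. assert (Cmod (1 + e) * Cmod P <= 3/2 * B).
      { apply Rmult_le_compat; auto using Cmod_ge_0. } lra.
Qed.

Lemma IZR_pos_INR q : IZR (Z.pos q) = INR (Pos.to_nat q).
Proof. rewrite INR_IZR_INZ, positive_nat_Z. reflexivity. Qed.

Lemma zpow_exp (p : Z) : exists M, 0 < M /\ forall s w : C, s * s = 1 + w -> 0 < Re s ->
  Cmod w <= 1/2 -> Cmod (zpowC s p - 1 - IZR p * w / 2) <= M * Cmod w ^ 2.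
Proof.
  assert (Hpre : forall s w : C, s * s = 1 + w -> 0 < Re s -> Cmod w <= 1/2 ->
     Cmod (s - 1) <= Cmod w /\ s - 1 - w / 2 = - ((s - 1) * (s - 1)) / 2 /\ s = 1 + (s - 1)).
  { intros s w Hsw Hre Hw. split; [|split; [|ring]].
    - assert (Hw' : w = (s - 1) * (s + 1)).
      { replace w with (s * s - 1). ring. rewrite Hsw. ring. }
      rewrite Hw', Cmod_mult.
      assert (1 <= Cmod (s + 1)).
      { pose proof (re_le_Cmod (s + 1)). rewrite re_plus, re_RtoC in H.
        apply Rle_trans with (Rabs (Re s + 1)); auto. rewrite Rabs_right; lra. }
      pose proof (Cmod_ge_0 (s - 1)). nra.
    - assert (Hw' : w = s * s - 1) by (rewrite Hsw; ring). rewrite Hw'. field. }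
  destruct p as [|q|q].
  - exists 1%R. split. lra. intros. simpl. replace (1 - 1 - 0 * w / 2) with (RtoC 0) by field.
    rewrite Cmod_0. pose proof (Cmod_ge_0 w). nra.
  - destruct (pown_exp (Pos.to_nat q)) as [B [HB HP]]. set (n := Pos.to_nat q).
    pose proof (pos_INR n) as Hn.
    exists (B + INR n)%R. split. lra. intros s w Hsw Hre Hw.
    destruct (Hpre s w Hsw Hre Hw) as [He [Hq Hs]]. set (e := s - 1) in *.
    assert (He2 : Cmod e <= 1/2) by lra.
    destruct (HP e He2) as [H1 _].
    unfold zpowC. fold n. rewrite Hs at 1. rewrite (IZR_pos_INR q). fold n.
    set (P := pw (1 + e) n) in *.
    replace (P - 1 - INR n * w / 2) with
      ((P - 1 - INR n * e) + INR n * (e - w / 2)) by field.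
    rewrite Hq. eapply Rle_trans. apply Cmod_triangle.
    rewrite Cmod_mult, Cmod_R, Rabs_right by lra.
    rewrite Cmod_div by (intro E; injection E; lra).
    rewrite Cmod_opp, Cmod_mult.
    replace (Cmod 2) with 2%R by (rewrite Cmod_R, Rabs_right; lra).
    pose proof (Cmod_ge_0 e). assert (Cmod e ^ 2 <= Cmod w ^ 2) by (apply pow_incr; lra).
    assert (H1' : Cmod (P - 1 - INR n * e) <= B * Cmod e ^ 2) by exact H1.
    assert (INR n * (Cmod e * Cmod e / 2) <= INR n * Cmod w ^ 2) by (apply Rmult_le_compat_l; nra).
    nra.
  - destruct (pown_exp (Pos.to_nat q)) as [B [HB HP]]. set (n := Pos.to_nat q).
    pose proof (pos_INR n) as Hn.
    exists (B * (B + INR n * B) + INR n)%R. split. nra. intros s w Hsw Hre Hw.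
    destruct (Hpre s w Hsw Hre Hw) as [He [Hq Hs]]. set (e := s - 1) in *.
    assert (He2 : Cmod e <= 1/2) by lra.
    destruct (HP e He2) as [H1 [H2 [H3 H4]]].
    change (Pos.to_nat q) with n in H1, H2, H3, H4.
    unfold zpowC. fold n. rewrite Hs at 1.
    replace (IZR (Z.neg q)) with (- INR n)%R by (rewrite <- Pos2Z.opp_pos, opp_IZR, (IZR_pos_INR q); reflexivity).
    set (P := pw (1 + e) n) in *.
    assert (HPn : P <> 0). { intro E. rewrite E, Cmod_0 in H3. pose proof (Rinv_0_lt_compat B HB). lra. }
    replace (/ P - 1 - RtoC (- INR n) * w / 2) with
      ((- (P - 1 - INR n * e) + INR n * e * (P - 1)) * / P - INR n * (e - w / 2))
      by (rewrite RtoC_opp; field; auto).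
    rewrite Hq. eapply Rle_trans. apply Cmod_triangle. rewrite Cmod_opp.
    rewrite !Cmod_mult, Cmod_inv by auto.
    rewrite Cmod_div by (intro E; injection E; lra).
    rewrite Cmod_opp, Cmod_mult, Cmod_R, Rabs_right by lra.
    replace (Cmod 2) with 2%R by (rewrite Cmod_R, Rabs_right; lra).
    assert (HiP : / Cmod P <= B).
    { rewrite <- (Rinv_inv B). apply Rinv_le_contravar; auto. apply Rinv_0_lt_compat; auto. }
    assert (Hnum : Cmod (- (P - 1 - INR n * e) + INR n * e * (P - 1)) <= (B + INR n * B) * Cmod e ^ 2).
    { eapply Rle_trans. apply Cmod_triangle. rewrite Cmod_opp, !Cmod_mult, Cmod_R, Rabs_right by lra.
      pose proof (Cmod_ge_0 e). assert (INR n * Cmod e * Cmod (P - 1) <= INR n * Cmod e * (B * Cmod e)).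
      { apply Rmult_le_compat_l; auto. apply Rmult_le_pos; auto. } nra. }
    pose proof (Cmod_ge_0 e). assert (Cmod e ^ 2 <= Cmod w ^ 2) by (apply pow_incr; lra).
    assert (Cmod (- (P - 1 - INR n * e) + INR n * e * (P - 1)) * / Cmod P <= (B + INR n * B) * Cmod e ^ 2 * B).
    { apply Rmult_le_compat; auto using Cmod_ge_0. apply Rlt_le, Rinv_0_lt_compat, Cmod_gt_0; auto. }
    assert (0 <= Cmod e ^ 2) by nra.
    assert (INR n * (Cmod e * Cmod e / 2) <= INR n * Cmod w ^ 2) by (apply Rmult_le_compat_l; nra).
    assert ((B + INR n * B) * Cmod e ^ 2 * B <= B * (B + INR n * B) * Cmod w ^ 2).
    { replace ((B + INR n * B) * Cmod e ^ 2 * B)%R with (B * (B + INR n * B) * Cmod e ^ 2)%R by ring.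
      apply Rmult_le_compat_l; auto. nra. }
    nra.
Qed.

Lemma is_RInt_Ci (f : R -> C) a b l :
  is_RInt (V:=C_R_NormedModule) f a b l ->
  is_RInt (V:=C_R_NormedModule) (fun t => Ci * f t) a b (Ci * l).
Proof.
  intros H.
  pose proof (is_RInt_fct_extend_fst (U:=R_NormedModule) (V:=R_NormedModule) f a b l H) as H1.
  pose proof (is_RInt_fct_extend_snd (U:=R_NormedModule) (V:=R_NormedModule) f a b l H) as H2.
  apply (is_RInt_ext (V:=C_R_NormedModule) (fun t => (- snd (f t), fst (f t))%R)).
  { intros x _. destruct (f x) as [u v]. unfold Ci, Cmult; simpl. f_equal; ring. }
  replace (Ci * l) with ((- snd l)%R, fst l).
  apply (is_RInt_fct_extend_pair (U:=R_NormedModule) (V:=R_NormedModule) (fun t => (- snd (f t), fst (f t))%R)); simpl; auto.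
  apply (is_RInt_opp (V:=R_NormedModule)) in H2. exact H2.
  destruct l as [u v]. unfold Ci, Cmult; simpl. f_equal; ring.
Qed.

Lemma is_RInt_Cmult (f : R -> C) a b l c :
  is_RInt (V:=C_R_NormedModule) f a b l ->
  is_RInt (V:=C_R_NormedModule) (fun t => c * f t) a b (c * l).
Proof.
  intros H.
  pose proof (is_RInt_scal (V:=C_R_NormedModule) f a b (Re c) l H) as H1.
  pose proof (is_RInt_scal (V:=C_R_NormedModule) _ a b (Im c) _ (is_RInt_Ci f a b l H)) as H2.
  pose proof (is_RInt_plus (V:=C_R_NormedModule) _ _ a b _ _ H1 H2) as H3.
  clear H1 H2.
  assert (E : forall x : C, c * x = plus (scal (Re c) x) (scal (Im c) (Ci * x))).
  { intros x. rewrite !scal_R_Cmult. change (c * x = (Re c * x) + (Im c * (Ci * x))).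
    destruct c as [u v]. destruct x as [p q]. unfold Ci, Re, Im, Cmult, Cplus, RtoC; simpl. f_equal; ring. }
  rewrite E. eapply (is_RInt_ext (V:=C_R_NormedModule)). 2: exact H3.
  intros x _. simpl. symmetry. apply E.
Qed.

Lemma ex_RInt_Cmult (f : R -> C) a b c :
  ex_RInt (V:=C_R_NormedModule) f a b -> ex_RInt (V:=C_R_NormedModule) (fun t => c * f t) a b.
Proof. intros [l H]. exists (c * l). apply is_RInt_Cmult; auto. Qed.

Lemma RInt_Cmult (f : R -> C) a b c :
  ex_RInt (V:=C_R_NormedModule) f a b ->
  RInt (V:=C_R_CompleteNormedModule) (fun t => c * f t) a b = c * RInt (V:=C_R_CompleteNormedModule) f a b.
Proof.
  intros H. apply is_RInt_unique. apply is_RInt_Cmult. apply (RInt_correct (V:=C_R_CompleteNormedModule)). exact H.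
Qed.

Definition cl (t : R) : R := Rmax 0 (Rmin 1 t).
Lemma cl_id t : 0 <= t <= 1 -> cl t = t.
Proof. intros. unfold cl. rewrite Rmin_right by lra. rewrite Rmax_right; lra. Qed.
Lemma cl_in t : 0 <= cl t <= 1.
Proof. unfold cl. split. apply Rmax_l. apply Rmax_lub. lra. apply Rmin_l. Qed.
Lemma cl_lip a b : Rabs (cl a - cl b) <= Rabs (a - b).
Proof.
  unfold cl. destruct (Rle_dec a 1), (Rle_dec b 1), (Rle_dec 0 a), (Rle_dec 0 b);
  repeat (try rewrite Rmin_right by lra; try rewrite Rmin_left by lra;
          try rewrite Rmax_right by lra; try rewrite Rmax_left by lra);
  unfold Rabs; repeat destruct Rcase_abs; lra.
Qed.

Definition ccont01 (f : R -> C) (t : R) := forall eps, 0 < eps -> exists d, 0 < d /\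
  forall t', 0 <= t' <= 1 -> Rabs (t' - t) < d -> Cmod (f t' - f t) < eps.

Lemma ccont01_cl (f : R -> C) : (forall t, 0 <= t <= 1 -> ccont01 f t) -> forall t, ccont (fun x => f (cl x)) t.
Proof.
  intros H t e He. destruct (H (cl t) (cl_in t) e He) as [d [Hd Hf]]. exists d. split; auto.
  intros t' Ht. apply Hf. apply cl_in. eapply Rle_lt_trans. apply cl_lip. auto.
Qed.

Lemma ccont_cl (f : R -> C) : (forall t, ccont f t) -> forall t, ccont (fun x => f (cl x)) t.
Proof.
  intros H t e He. destruct (H (cl t) e He) as [d [Hd Hf]]. exists d. split; auto.
  intros t' Ht. apply Hf. eapply Rle_lt_trans. apply cl_lip. auto.
Qed.

Lemma ex_RInt_cl (f : R -> C) : (forall t, ccont (fun x => f (cl x)) t) -> ex_RInt (V:=C_R_NormedModule) f 0 1.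
Proof.
  intros H. apply (ex_RInt_ext (V:=C_R_NormedModule) (fun x => f (cl x))).
  { intros x Hx. rewrite Rmin_left, Rmax_right in Hx by lra. rewrite cl_id; auto. lra. }
  apply (ex_RInt_continuous (V:=C_R_CompleteNormedModule)). intros z _. apply ccont_continuous. auto.
Qed.

Lemma ccont_Cmod_pt (f : R -> C) t : ccont f t -> continuity_pt (fun x => Cmod (f x)) t.
Proof.
  intros H e He. destruct (H e He) as [d [Hd Hf]]. exists d. split; auto.
  intros x [_ Hx]. simpl. unfold R_dist. unfold dist in Hx. simpl in Hx. unfold R_dist in Hx.
  eapply Rle_lt_trans. 2: apply (Hf x Hx).
  pose proof (Cmod_rev (f x) (f t)). pose proof (Cmod_rev (f t) (f x)). rewrite Cmod_sym in H1.
  unfold Rabs; destruct Rcase_abs; lra.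
Qed.

Lemma ccont_bound (f : R -> C) : (forall t, ccont (fun x => f (cl x)) t) ->
  exists M, 0 < M /\ forall t, 0 <= t <= 1 -> Cmod (f t) <= M.
Proof.
  intros H. destruct (continuity_ab_maj (fun x => Cmod (f (cl x))) 0 1) as [Mx [HM _]]. lra.
  intros c _. apply ccont_Cmod_pt. auto.
  exists (Cmod (f (cl Mx)) + 1)%R. split. pose proof (Cmod_ge_0 (f (cl Mx))); lra.
  intros t Ht. specialize (HM t Ht). simpl in HM. rewrite cl_id in HM; auto. lra.
Qed.

Lemma ccont_lbound (f : R -> C) : (forall t, ccont (fun x => f (cl x)) t) ->
  (forall t, 0 <= t <= 1 -> f t <> 0) ->
  exists m, 0 < m /\ forall t, 0 <= t <= 1 -> m <= Cmod (f t).
Proof.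
  intros H Hn. destruct (continuity_ab_min (fun x => Cmod (f (cl x))) 0 1) as [mx [HM Hmx]]. lra.
  intros c _. apply ccont_Cmod_pt. auto.
  exists (Cmod (f (cl mx))). split. apply Cmod_gt_0. apply Hn. apply cl_in.
  intros t Ht. specialize (HM t Ht). simpl in HM. rewrite (cl_id t) in HM; auto.
Qed.

Lemma is_derive_C_of_bound (F : C -> C) z0 l :
  (forall eps, 0 < eps -> exists d, 0 < d /\ forall h : C, h <> 0 -> Cmod h < d ->
     Cmod (F (z0 + h) - F z0 - h * l) <= eps * Cmod h) ->
  is_derive (K:=C_AbsRing) (V:=C_NormedModule) F z0 l.
Proof.
  intros H. split. apply is_linear_scal_l.
  intros x Hx. apply (is_filter_lim_locally_unique (V:=AbsRing_NormedModule C_AbsRing)) in Hx. subst x.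
  intros eps. destruct (H eps (cond_pos eps)) as [d [Hd Hb]].
  assert (Hnf : 0 < @norm_factor C_AbsRing (AbsRing_NormedModule C_AbsRing)) by apply norm_factor_gt_0.
  exists (mkposreal (d / @norm_factor C_AbsRing (AbsRing_NormedModule C_AbsRing)) (Rdiv_lt_0_compat _ _ Hd Hnf)).
  intros y Hy. apply (norm_compat2 (V:=AbsRing_NormedModule C_AbsRing)) in Hy. simpl in Hy.
  replace (norm_factor * (d / norm_factor))%R with d in Hy by (field; lra).
  change (Cmod (F y - F z0 - (y - z0) * l) <= eps * Cmod (y - z0)).
  change (Cmod (y - z0) < d) in Hy.
  destruct (Ceq_dec (y - z0) 0) as [E|E].
  - assert (y = z0) by (apply Ceq_minus; exact E).
    subst y. replace (F z0 - F z0 - (z0 - z0) * l) with (RtoC 0) by ring. rewrite E, Cmod_0. lra.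
  - specialize (Hb (y - z0) E Hy). assert (Ey : (z0 + (y - z0) : C) = y) by ring. rewrite Ey in Hb. exact Hb.
Qed.

Lemma is_derive_R_of_bound (f : R -> C) t l :
  (forall eps, 0 < eps -> exists d, 0 < d /\ forall h, h <> 0%R -> Rabs h < d ->
     Cmod (f (t + h)%R - f t - h * l) <= eps * Rabs h) ->
  is_derive (K:=R_AbsRing) (V:=C_R_NormedModule) f t l.
Proof.
  intros H. split. apply is_linear_scal_l.
  intros x Hx. apply (is_filter_lim_locally_unique (V:=R_NormedModule)) in Hx. subst x.
  intros eps. destruct (H eps (cond_pos eps)) as [d [Hd Hb]].
  exists (mkposreal d Hd).
  intros y Hy. change (Rabs (y - t) < d) in Hy.
  rewrite !normCR_eq. rewrite scal_R_Cmult. change (Cmod (f y - f t - (y - t)%R * l) <= eps * norm (minus y t)).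
  change (norm (minus y t)) with (Rabs (y - t)).
  destruct (Req_dec (y - t) 0) as [E|E].
  - assert (y = t) by lra. subst y. rewrite Rminus_diag. replace (f t - f t - RtoC 0 * l) with (RtoC 0) by ring.
    rewrite Cmod_0, Rabs_R0. lra.
  - specialize (Hb (y - t)%R E Hy). assert (Ey : (t + (y - t))%R = y) by ring. rewrite Ey in Hb. exact Hb.
Qed.


Lemma RInt_param_deriv (G : C -> R -> C) (D : R -> C) z0 r M :
  0 < r -> 0 <= M ->
  (forall z, Cmod (z - z0) < r -> ex_RInt (V:=C_R_NormedModule) (G z) 0 1) ->
  ex_RInt (V:=C_R_NormedModule) D 0 1 ->
  (forall h t, Cmod h < r -> 0 <= t <= 1 -> Cmod (G (z0 + h) t - G z0 t - h * D t) <= M * Cmod h ^ 2) ->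
  is_derive (K:=C_AbsRing) (V:=C_NormedModule)
    (fun z => RInt (V:=C_R_CompleteNormedModule) (G z) 0 1) z0 (RInt (V:=C_R_CompleteNormedModule) D 0 1).
Proof.
  intros Hr HM Hex HD Hb. apply is_derive_C_of_bound. intros eps He.
  exists (Rmin r (eps / (M + 1))). split. apply Rmin_pos; auto. apply Rdiv_lt_0_compat; lra.
  intros h Hh Hhd.
  assert (Hh1 : Cmod h < r) by (eapply Rlt_le_trans; [exact Hhd | apply Rmin_l]).
  assert (Hh2 : Cmod h < eps / (M + 1)) by (eapply Rlt_le_trans; [exact Hhd | apply Rmin_r]).
  assert (Ez : Cmod (z0 + h - z0) < r) by (replace (z0 + h - z0) with h by ring; auto).
  assert (Ez0 : Cmod (z0 - z0) < r) by (replace (z0 - z0) with (RtoC 0) by ring; rewrite Cmod_0; auto).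
  pose proof (Hex _ Ez) as E1. pose proof (Hex _ Ez0) as E2.
  assert (E3 : ex_RInt (V:=C_R_NormedModule) (fun t => G (z0 + h) t - G z0 t) 0 1)
    by (apply (ex_RInt_minus (V:=C_R_NormedModule)); auto).
  assert (E4 : ex_RInt (V:=C_R_NormedModule) (fun t => h * D t) 0 1) by (apply ex_RInt_Cmult; auto).
  assert (E5 : ex_RInt (V:=C_R_NormedModule) (fun t => G (z0 + h) t - G z0 t - h * D t) 0 1)
    by (apply (ex_RInt_minus (V:=C_R_NormedModule) (fun t => G (z0 + h) t - G z0 t) (fun t => h * D t)); auto).
  assert (Eq : RInt (V:=C_R_CompleteNormedModule) (fun t => G (z0 + h) t - G z0 t - h * D t) 0 1 =
     RInt (V:=C_R_CompleteNormedModule) (G (z0 + h)) 0 1 - RInt (V:=C_R_CompleteNormedModule) (G z0) 0 1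
       - h * RInt (V:=C_R_CompleteNormedModule) D 0 1).
  { rewrite (RInt_minus (V:=C_R_CompleteNormedModule) (fun t => G (z0 + h) t - G z0 t) (fun t => h * D t)); auto.
    rewrite (RInt_minus (V:=C_R_CompleteNormedModule) (G (z0 + h)) (G z0)); auto.
    rewrite RInt_Cmult; auto. }
  rewrite <- Eq.
  pose proof (norm_RInt_le_const (V:=C_R_NormedModule) (fun t => G (z0 + h) t - G z0 t - h * D t) 0 1 _ (M * Cmod h ^ 2)%R
     ltac:(lra) (fun t Ht => ltac:(rewrite normCR_eq; apply Hb; auto)) (RInt_correct (V:=C_R_CompleteNormedModule) _ _ _ E5)) as HN.
  rewrite normCR_eq in HN.
  eapply Rle_trans. exact HN.
  pose proof (Cmod_ge_0 h).
  assert (M * Cmod h <= eps).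
  { apply Rle_trans with ((M + 1) * Cmod h)%R. nra.
    apply Rle_trans with ((M + 1) * (eps / (M + 1)))%R. apply Rmult_le_compat_l; lra. right; field; lra. }
  nra.
Qed.

Lemma Cmod_small_eq0 (D : C) : (forall eps, 0 < eps -> Cmod D <= eps) -> D = 0.
Proof.
  intros H. destruct (Ceq_dec D 0); auto. exfalso. pose proof (proj1 (Cmod_gt_0 D) n).
  specialize (H (Cmod D / 2)%R ltac:(lra)). lra.
Qed.

Lemma Cmod_tri_minus (a b : C) : Cmod (a - b) <= Cmod a + Cmod b.
Proof. unfold Cminus. rewrite <- (Cmod_opp b). apply Cmod_triangle. Qed.

Lemma ftc01 (f df : R -> C) M :
  (forall t, 0 < t < 1 -> is_derive (K:=R_AbsRing) (V:=C_R_NormedModule) f t (df t)) ->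
  (forall t, 0 < t < 1 -> ccont df t) ->
  ex_RInt (V:=C_R_NormedModule) df 0 1 ->
  (forall t, 0 <= t <= 1 -> Cmod (df t) <= M) ->
  (forall eps, 0 < eps -> exists d, 0 < d /\ forall t, 0 < t < d -> Cmod (f t - f 0%R) < eps) ->
  (forall eps, 0 < eps -> exists d, 0 < d /\ forall t, 1 - d < t < 1 -> Cmod (f t - f 1%R) < eps) ->
  RInt (V:=C_R_CompleteNormedModule) df 0 1 = f 1%R - f 0%R.
Proof.
  intros Hd Hc Hex HM Hl Hr.
  assert (HM0 : 0 <= M) by (eapply Rle_trans; [apply Cmod_ge_0 | apply (HM 0%R); lra]).
  apply Ceq_minus. apply Cmod_small_eq0. intros eps He.
  destruct (Hl (eps/4)%R ltac:(lra)) as [d1 [Hd1 H1]].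
  destruct (Hr (eps/4)%R ltac:(lra)) as [d2 [Hd2 H2]].
  set (eta := Rmin (Rmin (1/4) (d1/2)) (Rmin (d2/2) (eps / (4 * (M + 1))))).
  assert (Heta : 0 < eta).
  { unfold eta. repeat apply Rmin_pos; try lra. apply Rdiv_lt_0_compat; lra. }
  assert (Heta1 : eta <= 1/4) by (unfold eta; eapply Rle_trans; [apply Rmin_l| apply Rmin_l]).
  assert (Heta2 : eta <= d1/2) by (unfold eta; eapply Rle_trans; [apply Rmin_l| apply Rmin_r]).
  assert (Heta3 : eta <= d2/2) by (unfold eta; eapply Rle_trans; [apply Rmin_r| apply Rmin_l]).
  assert (Heta4 : eta <= eps / (4 * (M + 1))) by (unfold eta; eapply Rle_trans; [apply Rmin_r| apply Rmin_r]).
  assert (Ex1 : ex_RInt (V:=C_R_NormedModule) df 0 eta) by (apply (ex_RInt_Chasles_1 (V:=C_R_CompleteNormedModule)) with 1%R; auto; lra).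
  assert (Ex2 : ex_RInt (V:=C_R_NormedModule) df eta 1) by (apply (ex_RInt_Chasles_2 (V:=C_R_CompleteNormedModule)) with 0%R; auto; lra).
  assert (Ex3 : ex_RInt (V:=C_R_NormedModule) df eta (1 - eta)) by (apply (ex_RInt_Chasles_1 (V:=C_R_CompleteNormedModule)) with 1%R; auto; lra).
  assert (Ex4 : ex_RInt (V:=C_R_NormedModule) df (1 - eta) 1) by (apply (ex_RInt_Chasles_2 (V:=C_R_CompleteNormedModule)) with eta; auto; lra).
  rewrite <- (RInt_Chasles (V:=C_R_CompleteNormedModule) df 0 eta 1) by auto.
  rewrite <- (RInt_Chasles (V:=C_R_CompleteNormedModule) df eta (1 - eta) 1) by auto.
  assert (Emid : RInt (V:=C_R_CompleteNormedModule) df eta (1 - eta) = f (1 - eta)%R - f eta).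
  { apply is_RInt_unique. apply (is_RInt_derive (V:=C_R_CompleteNormedModule)).
    - intros x Hx. rewrite Rmin_left, Rmax_right in Hx by lra. apply Hd. lra.
    - intros x Hx. rewrite Rmin_left, Rmax_right in Hx by lra. apply ccont_continuous. apply Hc. lra. }
  change (plus ?x ?y) with (x + y). rewrite Emid.
  assert (N1 : Cmod (RInt (V:=C_R_CompleteNormedModule) df 0 eta) <= eta * M).
  { rewrite <- normCR_eq. replace eta with (eta - 0)%R at 2 by ring.
    apply (norm_RInt_le_const (V:=C_R_NormedModule) df 0 eta). lra.
    intros x Hx. rewrite normCR_eq. apply HM. lra.
    apply (RInt_correct (V:=C_R_CompleteNormedModule)). auto. }
  assert (N2 : Cmod (RInt (V:=C_R_CompleteNormedModule) df (1 - eta) 1) <= eta * M).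
  { rewrite <- normCR_eq. replace eta with (1 - (1 - eta))%R at 2 by ring.
    apply (norm_RInt_le_const (V:=C_R_NormedModule) df (1 - eta) 1). lra.
    intros x Hx. rewrite normCR_eq. apply HM. lra.
    apply (RInt_correct (V:=C_R_CompleteNormedModule)). auto. }
  assert (N3 : Cmod (f eta - f 0%R) < eps / 4) by (apply H1; lra).
  assert (N4 : Cmod (f (1 - eta)%R - f 1%R) < eps / 4) by (apply H2; lra).
  set (A := RInt (V:=C_R_CompleteNormedModule) df 0 eta) in *.
  set (B := RInt (V:=C_R_CompleteNormedModule) df (1 - eta) 1) in *.
  change (Cmod (A + (f (1 - eta)%R - f eta + B) - (f 1%R - f 0%R)) <= eps).
  replace (A + (f (1 - eta)%R - f eta + B) - (f 1%R - f 0%R)) with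
    ((A + B) + ((f (1 - eta)%R - f 1%R) - (f eta - f 0%R))) by ring.
  pose proof (Cmod_triangle (A + B) ((f (1 - eta)%R - f 1%R) - (f eta - f 0%R))).
  pose proof (Cmod_triangle A B).
  pose proof (Cmod_tri_minus (f (1 - eta)%R - f 1%R) (f eta - f 0%R)).
  assert (eta * M <= eps / 4).
  { apply Rle_trans with (eps / (4 * (M + 1)) * M)%R. apply Rmult_le_compat_r; lra.
    apply Rle_trans with (eps / (4 * (M + 1)) * (M + 1))%R. apply Rmult_le_compat_l. apply Rlt_le, Rdiv_lt_0_compat; lra. lra.
    right. field. lra. }
  lra.
Qed.

Lemma branchpoly_S N u x : branchpoly (S N) u x = branchpoly N u x * (x - u N).
Proof. reflexivity. Qed.

Lemma branchpoly_upd_ge N u k z x : (N <= k)%nat -> branchpoly N (upd u k z) x = branchpoly N u x.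
Proof.
  induction N; intros H. reflexivity. rewrite !branchpoly_S, IHN by lia.
  unfold upd. replace (Nat.eqb N k) with false. reflexivity. symmetry. apply Nat.eqb_neq. lia.
Qed.

Lemma branchpoly_upd N u k z x : (k < N)%nat ->
  branchpoly N (upd u k z) x * (x - u k) = branchpoly N u x * (x - z).
Proof.
  induction N; intros H. lia. rewrite !branchpoly_S.
  destruct (Nat.eq_dec k N) as [->|Hk].
  - rewrite branchpoly_upd_ge by lia. unfold upd. rewrite Nat.eqb_refl. ring.
  - assert (upd u k z N = u N). { unfold upd. replace (Nat.eqb N k) with false. reflexivity. symmetry. apply Nat.eqb_neq. lia. }
    rewrite H0. replace (branchpoly N (upd u k z) x * (x - u N) * (x - u k)) with
      ((branchpoly N (upd u k z) x * (x - u k)) * (x - u N)) by ring.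
    rewrite IHN by lia. ring.
Qed.

Lemma branchpoly_nz N u x : (forall i, (i < N)%nat -> x <> u i) -> branchpoly N u x <> 0.
Proof.
  induction N; intros H. apply C1_nz. rewrite branchpoly_S. apply Cmult_neq_0.
  apply IHN. intros; apply H; lia. apply Cminus_eq_contra. apply H; lia.
Qed.

Lemma ccont_Re_pt (f : R -> C) t : ccont f t -> continuity_pt (fun x => Re (f x)) t.
Proof.
  intros H e He. destruct (H e He) as [d [Hd Hf]]. exists d. split; auto.
  intros x [_ Hx]. simpl. unfold R_dist. unfold dist in Hx. simpl in Hx. unfold R_dist in Hx.
  eapply Rle_lt_trans. 2: apply (Hf x Hx).
  replace (Re (f x) - Re (f t))%R with (Re (f x - f t)).
  apply re_le_Cmod. unfold Cminus. rewrite re_plus, re_opp. ring.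
Qed.

Lemma branch_re_pos (W : R -> C) (W0 c : C) :
  W0 <> 0 -> Cmod c <= 1/2 ->
  (forall l, 0 <= l <= 1 -> ccont01 W l) ->
  (forall l, 0 <= l <= 1 -> W l * W l = W0 * W0 * (1 - l * c)) ->
  W 0%R = W0 ->
  0 < Re (W 1%R / W0).
Proof.
  intros HW0 Hc Hcont Hsq H0.
  assert (Hnz : forall l, 0 <= l <= 1 -> Re (W l / W0) <> 0%R).
  { intros l Hl E. set (q := W l / W0).
    assert (Hq : q * q = 1 - l * c).
    { unfold q. replace (W l / W0 * (W l / W0)) with ((W l * W l) / (W0 * W0)) by (field; auto). rewrite Hsq by auto. field. auto. }
    assert (Re (q * q) = (- (Im q) ^ 2)%R). { rewrite re_mult. fold q in E. rewrite E. ring. }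
    rewrite Hq in H. unfold Cminus in H. rewrite re_plus, re_opp in H. rewrite re_RtoC in H.
    pose proof (re_le_Cmod (l * c)). rewrite Cmod_mult, Cmod_R, (Rabs_right l) in H1 by lra.
    assert (Rabs (Re (l * c)) <= 1/2). { eapply Rle_trans. exact H1. pose proof (Cmod_ge_0 c). nra. }
    pose proof (pow2_ge_0 (Im q)). unfold Rabs in H2. destruct Rcase_abs in H2; lra. }
  set (g := fun x => Re (W (cl x) / W0)).
  assert (Hg : forall a, continuity_pt g a).
  { intros a. unfold g. apply (ccont_Re_pt (fun x => W (cl x) / W0)).
    apply (ccont_mult (fun x => W (cl x)) (fun _ => / W0)). apply ccont01_cl; auto. apply ccont_const. }
  assert (g0 : g 0%R = 1%R). { unfold g. rewrite cl_id by lra. rewrite H0. replace (W0 / W0) with (RtoC 1) by (field; auto). apply re_RtoC. }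
  assert (g1 : g 1%R = Re (W 1%R / W0)). { unfold g. rewrite cl_id by lra. reflexivity. }
  destruct (Rlt_le_dec 0 (Re (W 1%R / W0))) as [Hp|Hn]; auto.
  exfalso. destruct (Req_dec (Re (W 1%R / W0)) 0) as [E|E]. apply (Hnz 1%R); auto; lra.
  destruct (IVT_interv (fun x => - g x)%R 0 1) as [z [Hz Hgz]].
  - intros a _. apply continuity_pt_opp. apply Hg.
  - lra.
  - rewrite g0; lra.
  - rewrite g1; lra.
  - apply (Hnz z Hz). unfold g in Hgz. rewrite cl_id in Hgz by auto. lra.
Qed.


Definition jcont N (U : (nat -> C) -> Prop) (W : (nat -> C) -> R -> C) :=
  forall u t, U u -> (0 <= t <= 1)%R ->
     forall eps : R, (0 < eps)%R -> exists delta : R, (0 < delta)%R /\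
       forall u' t', U u' -> (0 <= t' <= 1)%R ->
         (forall i, (i < N)%nat -> (Cmod (u' i - u i) < delta)%R) ->
         (Rabs (t' - t) < delta)%R ->
         (Cmod (W u' t' - W u t) < eps)%R.

Lemma upd_same u k : upd u k (u k) = u.
Proof. apply functional_extensionality. intros i. unfold upd. destruct (Nat.eqb_spec i k); subst; auto. Qed.

Lemma upd_k u k z : upd u k z k = z.
Proof. unfold upd. rewrite Nat.eqb_refl. reflexivity. Qed.

Lemma upd_ne u k z j : j <> k -> upd u k z j = u j.
Proof. intros. unfold upd. destruct (Nat.eqb_spec j k); auto. lia. Qed.

Lemma open_upd N U u k : openN N U -> U u -> (k < N)%nat ->
  exists eo, 0 < eo /\ forall z, Cmod (z - u k) < eo -> U (upd u k z).
Proof.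
  intros HU Hu Hk. destruct (HU u Hu) as [e [He H]]. exists e. split; auto. intros z Hz.
  apply H. intros i Hi. unfold upd. destruct (Nat.eqb_spec i k). subst; auto.
  replace (u i - u i) with (RtoC 0) by ring. rewrite Cmod_0. auto.
Qed.

Lemma jcont_t N U W u : jcont N U W -> U u -> forall t, 0 <= t <= 1 -> ccont01 (W u) t.
Proof.
  intros H Hu t Ht e He. destruct (H u t Hu Ht e He) as [d [Hd Hb]]. exists d. split; auto.
  intros t' Ht' Htt. apply Hb; auto. intros i _. replace (u i - u i) with (RtoC 0) by ring. rewrite Cmod_0. auto.
Qed.

Lemma ccont_cl_inner (g : R -> C) t : ccont (fun x => g (cl x)) t -> 0 < t < 1 -> ccont g t.
Proof.
  intros H Ht e He. destruct (H e He) as [d [Hd Hb]]. exists (Rmin d (Rmin t (1 - t))). split.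
  repeat apply Rmin_pos; lra. intros t' Ht'.
  assert (Rabs (t' - t) < d) by (eapply Rlt_le_trans; [exact Ht'| apply Rmin_l]).
  assert (Rabs (t' - t) < Rmin t (1 - t)) by (eapply Rlt_le_trans; [exact Ht'| apply Rmin_r]).
  pose proof (Rmin_l t (1 - t)). pose proof (Rmin_r t (1 - t)).
  assert (0 <= t' <= 1) by (unfold Rabs in H1; destruct Rcase_abs in H1; lra).
  specialize (Hb t' H0). rewrite (cl_id t'), (cl_id t) in Hb; auto. lra.
Qed.

Lemma deriv_ccont (s s' : R -> C) : (forall t, is_derive s t (s' t)) -> forall t, ccont s t.
Proof.
  intros H t. apply continuous_ccont. apply ex_derive_continuous. exists (s' t). apply H.
Qed.

Lemma integrand_ccont (W s s' : R -> C) (c : C) p :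
  (forall t, 0 <= t <= 1 -> ccont01 W t) -> (forall t, ccont s t) -> (forall t, ccont s' t) ->
  (forall t, 0 <= t <= 1 -> W t <> 0) -> (forall t, 0 <= t <= 1 -> s t <> c) ->
  forall t, ccont (fun x => zpowC (W (cl x)) p / (s (cl x) - c) * s' (cl x)) t.
Proof.
  intros HW Hs Hs' HWn Hsn t.
  apply (ccont_mult (fun x => zpowC (W (cl x)) p / (s (cl x) - c)) (fun x => s' (cl x))).
  apply (ccont_mult (fun x => zpowC (W (cl x)) p) (fun x => / (s (cl x) - c))).
  apply (ccont_zpowC (fun x => W (cl x))). apply HWn, cl_in. apply ccont01_cl; auto.
  apply (ccont_inv (fun x => s (cl x) - c)). apply Cminus_eq_contra, Hsn, cl_in.
  apply (ccont_minus (fun x => s (cl x)) (fun _ => c)). apply ccont_cl; auto. apply ccont_const.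
  apply ccont_cl; auto.
Qed.

Definition Dfun (n : Z) (s s' W : R -> C) (u : nat -> C) (k j : nat) (t : R) : C :=
  zpowC (W t) n / (s t - u k) * s' t *
  (- IZR n / 2 * / (s t - u j) + (if Nat.eqb j k then / (s t - u k) else 0)).

Lemma Dfun_ccont n (s s' W : R -> C) u k j :
  (forall t, 0 <= t <= 1 -> ccont01 W t) -> (forall t, ccont s t) -> (forall t, ccont s' t) ->
  (forall t, 0 <= t <= 1 -> W t <> 0) -> (forall t, 0 <= t <= 1 -> s t <> u k) ->
  (forall t, 0 <= t <= 1 -> s t <> u j) ->
  forall t, ccont (fun x => Dfun n s s' W u k j (cl x)) t.
Proof.
  intros HW Hs Hs' HWn Hk Hj t. unfold Dfun.
  apply (ccont_mult (fun x => zpowC (W (cl x)) n / (s (cl x) - u k) * s' (cl x))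
     (fun x => (- IZR n / 2 * / (s (cl x) - u j) + (if Nat.eqb j k then / (s (cl x) - u k) else 0)))).
  apply integrand_ccont; auto.
  apply (ccont_plus (fun x => - IZR n / 2 * / (s (cl x) - u j)) (fun x => if Nat.eqb j k then / (s (cl x) - u k) else 0)).
  apply (ccont_mult (fun _ => - IZR n / 2) (fun x => / (s (cl x) - u j))). apply ccont_const.
  apply (ccont_inv (fun x => s (cl x) - u j)). apply Cminus_eq_contra, Hj, cl_in.
  apply (ccont_minus (fun x => s (cl x)) (fun _ => u j)). apply ccont_cl; auto. apply ccont_const.
  destruct (Nat.eqb j k).
  apply (ccont_inv (fun x => s (cl x) - u k)). apply Cminus_eq_contra, Hk, cl_in.
  apply (ccont_minus (fun x => s (cl x)) (fun _ => u k)). apply ccont_cl; auto. apply ccont_const.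
  apply ccont_const.
Qed.

Lemma cycle_deriv N n U (s s' : R -> C) (Vm : (nat -> C) -> R -> C) u k j :
  openN N U -> U u -> (k < N)%nat -> (j < N)%nat ->
  (forall t, is_derive s t (s' t)) -> (forall t, continuous s' t) ->
  (forall u t i, U u -> 0 <= t <= 1 -> (i < N)%nat -> s t <> u i) ->
  (forall u t, U u -> 0 <= t <= 1 -> Vm u t * Vm u t = branchpoly N u (s t)) ->
  jcont N U Vm ->
  is_derive (K:=C_AbsRing) (V:=C_NormedModule)
    (fun z => cyc_int s s' (Vm (upd u k z)) (fun x v => zpowC v n / (x - upd u k z j))) (u k)
    (RInt (V:=C_R_CompleteNormedModule) (Dfun n s s' (Vm u) u k j) 0 1).
Proof.
  intros HU Hu Hk Hj Hs Hs' Hav Hsq Hjc.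
  assert (Hsc : forall t, ccont s t) by (apply (deriv_ccont s s'); auto).
  assert (Hs'c : forall t, ccont s' t) by (intros; apply continuous_ccont; auto).
  destruct (open_upd N U u k HU Hu Hk) as [eo [Heo HUo]].
  assert (HVnz : forall u' t, U u' -> 0 <= t <= 1 -> Vm u' t <> 0).
  { intros u' t Hu' Ht E. apply (branchpoly_nz N u' (s t)). intros i Hi. apply Hav; auto.
    rewrite <- Hsq by auto. rewrite E. ring. }
  assert (L1 : forall t, ccont (fun x => s (cl x) - u k) t).
  { intros t. apply (ccont_minus (fun x => s (cl x)) (fun _ => u k)). apply ccont_cl; auto. apply ccont_const. }
  assert (L2 : forall t, 0 <= t <= 1 -> s t - u k <> 0).
  { intros t Ht. apply Cminus_eq_contra. apply Hav; auto. }
  destruct (ccont_lbound (fun t => s t - u k) L1 L2) as [rho [Hrho Hrhob]].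
  set (r := Rmin eo (rho / 2)).
  assert (Hr : 0 < r) by (apply Rmin_pos; lra).
  set (p := if Nat.eqb j k then (n - 2)%Z else n).
  set (Kp := fun t => zpowC (Vm u t) n / (s t - u j) * s' t).
  assert (L3 : forall t, ccont (fun x => Kp (cl x)) t).
  { unfold Kp. apply integrand_ccont; try (apply jcont_t with N U; now auto); try (intros ? ?; apply HVnz; now auto); try (intros ? ?; apply Hav; now auto); auto. }
  destruct (ccont_bound Kp L3) as [BK [HBK HBKb]].
  destruct (zpow_exp p) as [Mp [HMp HMpb]].
  unfold cyc_int.
  apply (RInt_param_deriv (fun z t => zpowC (Vm (upd u k z) t) n / (s t - upd u k z j) * s' t)
           (Dfun n s s' (Vm u) u k j) (u k) r (BK * Mp / (rho * rho))).
  - exact Hr.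
  - apply Rmult_le_pos. nra. apply Rlt_le, Rinv_0_lt_compat. nra.
  - intros z Hz. assert (HUz : U (upd u k z)) by (apply HUo; eapply Rlt_le_trans; [exact Hz | apply Rmin_l]).
    apply ex_RInt_cl. apply integrand_ccont; try (apply jcont_t with N U; now auto); try (intros ? ?; apply HVnz; now auto); try (intros ? ?; apply Hav; now auto); auto.
  - apply ex_RInt_cl. apply Dfun_ccont; try (apply jcont_t with N U; now auto); try (intros ? ?; apply HVnz; now auto); try (intros ? ?; apply Hav; now auto); auto.
  - intros h t Hh Ht.
    assert (Hh1 : Cmod h < eo) by (eapply Rlt_le_trans; [exact Hh | apply Rmin_l]).
    assert (Hh2 : Cmod h < rho / 2) by (eapply Rlt_le_trans; [exact Hh | apply Rmin_r]).
    assert (HUh : forall l : R, 0 <= l <= 1 -> U (upd u k (u k + l * h))).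
    { intros l Hl. apply HUo. replace (u k + l * h - u k) with (l * h) by ring.
      rewrite Cmod_mult, Cmod_R, Rabs_right by lra. pose proof (Cmod_ge_0 h). nra. }
    set (d := s t - u k). assert (Hd : rho <= Cmod d) by (apply Hrhob; auto).
    assert (Hdn : d <> 0). { intro E. rewrite E, Cmod_0 in Hd. lra. }
    set (V0 := Vm u t). assert (HV0 : V0 <> 0) by (apply HVnz; auto).
    assert (Hc : Cmod (h / d) <= 1/2).
    { rewrite Cmod_div by auto. apply Rle_trans with ((rho / 2) / rho)%R.
      unfold Rdiv. apply Rmult_le_compat. apply Cmod_ge_0. apply Rlt_le, Rinv_0_lt_compat, Cmod_gt_0; auto.
      lra. apply Rinv_le_contravar; auto. right; field; lra. }
    assert (Hsql : forall l : R, 0 <= l <= 1 ->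
       Vm (upd u k (u k + l * h)) t * Vm (upd u k (u k + l * h)) t = V0 * V0 * (1 - l * (h / d))).
    { intros l Hl. rewrite Hsq by auto. unfold V0. rewrite Hsq by auto.
      pose proof (branchpoly_upd N u k (u k + l * h) (s t) Hk) as E.
      set (B1 := branchpoly N (upd u k (u k + l * h)) (s t)) in *.
      set (B0 := branchpoly N u (s t)) in *. fold d in E.
      assert (E2 : B1 = B0 * (s t - (u k + l * h)) / d) by (rewrite <- E; field; auto).
      rewrite E2. replace (s t - (u k + l * h)) with (d - l * h) by (unfold d; ring). field. auto. }
    assert (Hcl : forall l : R, 0 <= l <= 1 -> ccont01 (fun l => Vm (upd u k (u k + l * h)) t) l).
    { intros l Hl e He. destruct (Hjc (upd u k (u k + l * h)) t (HUh l Hl) Ht e He) as [dl [Hdl Hb]].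
      exists (dl / (Cmod h + 1))%R. split. apply Rdiv_lt_0_compat; auto. pose proof (Cmod_ge_0 h); lra.
      intros l' Hl' Hll'. apply Hb; auto.
      - intros i Hi. unfold upd. destruct (Nat.eqb i k).
        + replace (u k + l' * h - (u k + l * h)) with ((l' - l)%R * h) by (rewrite RtoC_minus; ring).
          rewrite Cmod_mult, Cmod_R. pose proof (Cmod_ge_0 h). pose proof (Rabs_pos (l' - l)).
          apply Rle_lt_trans with (Rabs (l' - l) * (Cmod h + 1))%R. nra.
          apply Rlt_le_trans with (dl / (Cmod h + 1) * (Cmod h + 1))%R. apply Rmult_lt_compat_r; lra.
          right; field; lra.
        + replace (u i - u i) with (RtoC 0) by ring. rewrite Cmod_0. auto.
      - rewrite Rminus_diag, Rabs_R0. auto. }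
    assert (Hbr := branch_re_pos (fun l => Vm (upd u k (u k + l * h)) t) V0 (h / d) HV0 Hc Hcl Hsql).
    simpl in Hbr. replace (u k + 0%R * h) with (u k) in Hbr by ring. rewrite upd_same in Hbr.
    specialize (Hbr eq_refl). replace (u k + 1%R * h) with (u k + h) in Hbr by ring.
    pose proof (Hsql 1%R ltac:(lra)) as Hq1. replace (u k + 1%R * h) with (u k + h) in Hq1 by ring.
    set (Vh := Vm (upd u k (u k + h)) t) in *.
    set (q := Vh / V0) in *.
    assert (Hq2 : q * q = 1 + - (h / d)).
    { replace (q * q) with ((Vh * Vh) / (V0 * V0)) by (unfold q; field; auto). rewrite Hq1. field. auto. }
    assert (Hre : 0 < Re q) by exact Hbr.
    assert (Hqn : q <> 0). { intro E. rewrite E in Hre. simpl in Hre. lra. }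
    assert (Hw : Cmod (- (h / d)) <= 1/2) by (rewrite Cmod_opp; auto).
    pose proof (HMpb q (- (h / d)) Hq2 Hre Hw) as Hzb.
    assert (EVh : Vh = V0 * q) by (unfold q; field; auto).
    rewrite upd_same. fold V0. rewrite EVh. rewrite zpowC_mult by auto.
    assert (Eid : forall (A : C), A = Kp t * (zpowC q p - 1 - IZR p * - (h / d) / 2) ->
       Cmod A <= BK * Mp / (rho * rho) * Cmod h ^ 2).
    { intros A ->. rewrite Cmod_mult. pose proof (HBKb t Ht).
      assert (Cmod (- (h / d)) ^ 2 <= Cmod h ^ 2 / (rho * rho)).
      { rewrite Cmod_opp, Cmod_div by auto. unfold Rdiv. rewrite Rpow_mult_distr.
        apply Rmult_le_compat_l. apply pow2_ge_0. rewrite pow_inv. apply Rinv_le_contravar. nra.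
        simpl. nra. }
      apply Rle_trans with (BK * (Mp * Cmod (- (h / d)) ^ 2))%R.
      apply Rmult_le_compat; auto using Cmod_ge_0.
      replace (BK * Mp / (rho * rho) * Cmod h ^ 2)%R with (BK * (Mp * (Cmod h ^ 2 / (rho * rho))))%R by (field; lra).
      apply Rmult_le_compat_l. lra. apply Rmult_le_compat_l. lra. auto. }
    apply Eid. clear Eid Hzb.
    unfold Kp, Dfun, p. fold V0. fold d.
    destruct (Nat.eqb_spec j k) as [Ejk|Ejk].
    + subst j. rewrite upd_k. rewrite zpowC_m2 by auto. rewrite minus_IZR.
      assert (Eden : s t - (u k + h) = d * (q * q)) by (rewrite Hq2; unfold d; field; auto).
      rewrite Eden. fold d.
      assert (Eh : h = d * (1 - q * q)) by (rewrite Hq2; field; auto).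
      rewrite Eh. rewrite RtoC_minus. field. split; auto.
    + rewrite upd_ne by auto. field. split; auto. apply Cminus_eq_contra. apply Hav; auto.
Qed.

Fixpoint prodC (m : nat) (f : nat -> C) : C :=
  match m with O => RtoC 1 | S m' => prodC m' f * f m' end.

Lemma bp_shift N u x D : (forall i, (i < N)%nat -> x <> u i) ->
  branchpoly N u (x + D) = branchpoly N u x * prodC N (fun i => 1 + D * / (x - u i)).
Proof.
  induction N; intros H. simpl. change (RtoC 1 = 1 * 1). ring.
  rewrite !branchpoly_S. simpl. rewrite IHN by (intros; apply H; lia).
  assert (x - u N <> 0) by (apply Cminus_eq_contra; apply H; lia). field. auto.
Qed.

Lemma prod_exp N (a : nat -> C) : exists C2, 0 <= C2 /\ forall D : C, Cmod D <= 1 ->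
  Cmod (prodC N (fun i => 1 + D * a i) - 1 - D * sumC N a) <= C2 * Cmod D ^ 2.
Proof.
  induction N.
  - exists 0%R. split. lra. intros D HD. simpl. replace (1 - 1 - D * 0) with (RtoC 0) by ring. rewrite Cmod_0. lra.
  - destruct IHN as [C2 [HC2 H]]. exists (C2 + (C2 + Cmod (sumC N a)) * Cmod (a N))%R.
    split. pose proof (Cmod_ge_0 (sumC N a)). pose proof (Cmod_ge_0 (a N)). nra.
    intros D HD. simpl. set (P := prodC N (fun i => 1 + D * a i)). specialize (H D HD). fold P in H.
    replace (P * (1 + D * a N) - 1 - D * (sumC N a + a N)) with
      ((P - 1 - D * sumC N a) + (P - 1) * (D * a N)) by ring.
    eapply Rle_trans. apply Cmod_triangle. rewrite !Cmod_mult.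
    assert (HP1 : Cmod (P - 1) <= (C2 + Cmod (sumC N a)) * Cmod D).
    { replace (P - 1) with ((P - 1 - D * sumC N a) + D * sumC N a) by ring.
      eapply Rle_trans. apply Cmod_triangle. rewrite Cmod_mult. pose proof (Cmod_ge_0 D). assert (C2 * Cmod D ^ 2 <= C2 * Cmod D) by (apply Rmult_le_compat_l; nra). nra. }
    pose proof (Cmod_ge_0 D). pose proof (Cmod_ge_0 (a N)). pose proof (Cmod_ge_0 (P - 1)).
    assert (Cmod (P - 1) * (Cmod D * Cmod (a N)) <= (C2 + Cmod (sumC N a)) * Cmod D * (Cmod D * Cmod (a N))).
    { apply Rmult_le_compat_r. nra. auto. }
    nra.
Qed.

Lemma sumC_if N k (b : C) : sumC N (fun j => if Nat.eqb j k then b else 0) = if Nat.ltb k N then b else 0.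
Proof.
  induction N. simpl. destruct k; reflexivity.
  simpl sumC. rewrite IHN. destruct (Nat.eqb_spec N k), (Nat.ltb_spec k N), (Nat.ltb_spec k (S N)); try lia; subst; ring.
Qed.

Lemma sumC_lin N (A c : C) (a e : nat -> C) :
  sumC N (fun j => A * (c * a j + e j)) = A * (c * sumC N a + sumC N e).
Proof. induction N. simpl. ring. simpl. rewrite IHN. ring. Qed.

Lemma ccont_sumC N (F : nat -> R -> C) t : (forall j, (j < N)%nat -> ccont (F j) t) -> ccont (fun x => sumC N (fun j => F j x)) t.
Proof.
  induction N; intros H. apply (ccont_const (RtoC 0)).
  apply (ccont_plus (fun x => sumC N (fun j => F j x)) (F N)). apply IHN; intros; apply H; lia. apply H; lia.
Qed.

Lemma RInt_sumC N (F : nat -> R -> C) :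
  (forall j, (j < N)%nat -> ex_RInt (V:=C_R_NormedModule) (F j) 0 1) ->
  ex_RInt (V:=C_R_NormedModule) (fun t => sumC N (fun j => F j t)) 0 1 /\
  RInt (V:=C_R_CompleteNormedModule) (fun t => sumC N (fun j => F j t)) 0 1 =
  sumC N (fun j => RInt (V:=C_R_CompleteNormedModule) (F j) 0 1).
Proof.
  induction N; intros H.
  - split. simpl. apply (ex_RInt_const (V:=C_R_NormedModule)).
    simpl. rewrite (RInt_const (V:=C_R_CompleteNormedModule)). rewrite scal_R_Cmult. ring.
  - destruct (IHN (fun j Hj => H j ltac:(lia))) as [H1 H2]. split.
    + apply (ex_RInt_plus (V:=C_R_NormedModule) (fun t => sumC N (fun j => F j t)) (F N)); auto; apply H; lia.
    + simpl. rewrite <- H2.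
      apply (RInt_plus (V:=C_R_CompleteNormedModule) (fun t => sumC N (fun j => F j t)) (F N)); auto; apply H; lia.
Qed.

Lemma is_derive_R_bound (f : R -> C) t l : is_derive (K:=R_AbsRing) (V:=C_R_NormedModule) f t l ->
  forall eps, 0 < eps -> exists d, 0 < d /\ forall h, Rabs h < d -> Cmod (f (t + h)%R - f t - h * l) <= eps * Rabs h.
Proof.
  intros [_ H] eps He. specialize (H t (fun P HP => HP)).
  destruct (H (mkposreal eps He)) as [d Hd]. exists d. split. apply cond_pos.
  intros h Hh. specialize (Hd (t + h)%R). simpl in Hd.
  assert (B : ball t d (t + h)%R). { change (Rabs (t + h - t) < d). replace (t + h - t)%R with h by ring. auto. }
  specialize (Hd B). rewrite !normCR_eq in Hd. rewrite scal_R_Cmult in Hd.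
  change (norm (minus (t + h)%R t)) with (Rabs (t + h - t)) in Hd.
  replace (t + h - t)%R with h in Hd by ring.
  change (minus (t + h)%R t) with (t + h - t)%R in Hd.
  replace (t + h - t)%R with h in Hd by ring. exact Hd.
Qed.

Lemma t_deriv N n (s s' W : R -> C) (u : nat -> C) k t :
  (k < N)%nat -> 0 < t < 1 ->
  is_derive s t (s' t) ->
  (forall t, 0 <= t <= 1 -> forall i, (i < N)%nat -> s t <> u i) ->
  (forall t, 0 <= t <= 1 -> W t * W t = branchpoly N u (s t)) ->
  ccont01 W t ->
  is_derive (K:=R_AbsRing) (V:=C_R_NormedModule) (fun x => zpowC (W x) n / (s x - u k)) t
   (zpowC (W t) n / (s t - u k) * s' t * (IZR n / 2 * sumC N (fun i => / (s t - u i)) - / (s t - u k))).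
Proof.
  intros Hk Ht Hs Hav Hsq HWc. apply is_derive_R_of_bound. intros eps He.
  assert (Ht01 : 0 <= t <= 1) by lra.
  set (X := zpowC (W t) n). set (d := s t - u k). set (b := / d).
  set (a := fun i => / (s t - u i)). set (S := sumC N a).
  change (sumC N (fun i => / (s t - u i))) with S.
  set (c := IZR n / 2 * S - b).
  assert (Hdn : d <> 0) by (apply Cminus_eq_contra; apply Hav; auto).
  assert (HWn : W t <> 0).
  { intro E. apply (branchpoly_nz N u (s t)). intros i Hi. apply Hav; auto. rewrite <- Hsq by auto. rewrite E. ring. }
  destruct (prod_exp N a) as [C2 [HC2 Hprod]].
  destruct (zpow_exp n) as [Mn [HMn Hzp]].
  set (A := (Cmod (X / d) + 1)%R). set (cc := (Cmod c + 1)%R). set (bb := Cmod b). set (Sb := Cmod S).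
  set (sp := (Cmod (s' t) + 1)%R).
  set (K := (Mn * (C2 + Sb) ^ 2 + Cmod (IZR n / 2) * C2 + bb * Cmod c)%R).
  set (L := (1 + 2 * bb + 2 * (C2 + Sb))%R).
  assert (HA : 0 < A) by (unfold A; pose proof (Cmod_ge_0 (X / d)); lra).
  assert (Hcc : 0 < cc) by (unfold cc; pose proof (Cmod_ge_0 c); lra).
  assert (Hbb : 0 <= bb) by apply Cmod_ge_0.
  assert (HSb : 0 <= Sb) by apply Cmod_ge_0.
  assert (Hsp : 1 <= sp) by (unfold sp; pose proof (Cmod_ge_0 (s' t)); lra).
  assert (HK : 0 <= K).
  { unfold K. pose proof (Cmod_ge_0 (IZR n / 2)). pose proof (Cmod_ge_0 c).
    apply Rplus_le_le_0_compat. apply Rplus_le_le_0_compat. apply Rmult_le_pos; [lra|apply pow2_ge_0].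
    apply Rmult_le_pos; lra. apply Rmult_le_pos; lra. }
  assert (HL : 1 <= L) by (unfold L; lra).
  set (e1 := Rmin 1 (eps / (2 * A * cc))).
  assert (He1 : 0 < e1) by (apply Rmin_pos; [lra | apply Rdiv_lt_0_compat; [lra | nra]]).
  destruct (is_derive_R_bound s t (s' t) Hs e1 He1) as [d1 [Hd1 Hb1]].
  assert (HWp : 0 < Cmod (W t) / 2) by (apply Rdiv_lt_0_compat; [apply Cmod_gt_0; auto | lra]).
  destruct (HWc _ HWp) as [d3 [Hd3 Hb3]].
  set (dL := (1 / (sp * L))%R).
  assert (HdL : 0 < dL) by (apply Rdiv_lt_0_compat; nra).
  set (dE := (eps / (2 * A * (2 * K * sp ^ 2 + 1)))%R).
  assert (HdE : 0 < dE) by (apply Rdiv_lt_0_compat; [lra | apply Rmult_lt_0_compat; nra]).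
  exists (Rmin (Rmin d1 d3) (Rmin (Rmin t (1 - t)) (Rmin dL dE))).
  split. repeat apply Rmin_pos; lra.
  intros tau Htau0 Htau.
  assert (T1 : Rabs tau < d1) by (eapply Rlt_le_trans; [exact Htau | eapply Rle_trans; [apply Rmin_l | apply Rmin_l]]).
  assert (T3 : Rabs tau < d3) by (eapply Rlt_le_trans; [exact Htau | eapply Rle_trans; [apply Rmin_l | apply Rmin_r]]).
  assert (T4 : Rabs tau < Rmin t (1 - t)) by (eapply Rlt_le_trans; [exact Htau | eapply Rle_trans; [apply Rmin_r | apply Rmin_l]]).
  assert (T5 : Rabs tau < dL) by (eapply Rlt_le_trans; [exact Htau | eapply Rle_trans; [apply Rmin_r | eapply Rle_trans; [apply Rmin_r| apply Rmin_l]]]).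
  assert (T6 : Rabs tau < dE) by (eapply Rlt_le_trans; [exact Htau | eapply Rle_trans; [apply Rmin_r | eapply Rle_trans; [apply Rmin_r| apply Rmin_r]]]).
  pose proof (Rmin_l t (1 - t)). pose proof (Rmin_r t (1 - t)).
  assert (Htt : 0 <= t + tau <= 1) by (unfold Rabs in T4; destruct Rcase_abs in T4; lra).
  pose proof (Rabs_pos tau) as Hta.
  set (D := s (t + tau)%R - s t).
  assert (HD1 : Cmod (D - tau * s' t) <= e1 * Rabs tau) by (apply Hb1; auto).
  assert (He1l : e1 <= 1) by apply Rmin_l.
  assert (HD2 : Cmod D <= sp * Rabs tau).
  { replace D with ((D - tau * s' t) + tau * s' t) by ring. eapply Rle_trans. apply Cmod_triangle.
    rewrite Cmod_mult, Cmod_R. unfold sp. nra. }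
  assert (HD3 : Cmod D <= 1 / L).
  { apply Rle_trans with (sp * Rabs tau)%R; auto.
    apply Rle_trans with (sp * dL)%R. apply Rmult_le_compat_l; lra. unfold dL. right. field. nra. }
  assert (HD4 : Cmod D <= 1) by (eapply Rle_trans; [exact HD3 | apply Rmult_le_reg_l with L; [lra|]; unfold Rdiv; rewrite Rmult_1_l, Rinv_r; lra]).
  assert (HD5 : bb * Cmod D <= 1/2).
  { apply Rle_trans with (bb * (1 / L))%R. apply Rmult_le_compat_l; auto.
    unfold L. apply Rmult_le_reg_r with (1 + 2 * bb + 2 * (C2 + Sb))%R. lra. unfold Rdiv. rewrite Rmult_1_l. field_simplify; lra. }
  assert (HD6 : (C2 + Sb) * Cmod D <= 1/2).
  { apply Rle_trans with ((C2 + Sb) * (1 / L))%R. apply Rmult_le_compat_l; [lra|auto].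
    unfold L. apply Rmult_le_reg_r with (1 + 2 * bb + 2 * (C2 + Sb))%R. lra. unfold Rdiv. rewrite Rmult_1_l. field_simplify; lra. }
  set (q := W (t + tau)%R / W t).
  assert (Hq1 : Cmod (q - 1) < 1/2).
  { specialize (Hb3 (t + tau)%R Htt). replace (t + tau - t)%R with tau in Hb3 by ring. specialize (Hb3 T3).
    unfold q. replace (W (t + tau)%R / W t - 1) with ((W (t + tau)%R - W t) / W t) by (field; auto).
    rewrite Cmod_div by auto. apply Rmult_lt_reg_r with (Cmod (W t)). apply Cmod_gt_0; auto.
    unfold Rdiv. rewrite Rmult_assoc, Rinv_l by (apply Rgt_not_eq, Cmod_gt_0; auto). lra. }
  assert (Hre : 0 < Re q).
  { pose proof (re_le_Cmod (q - 1)).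
    assert (E : Re (q - 1) = (Re q - 1)%R) by (unfold Cminus; rewrite re_plus, re_opp, re_RtoC; ring). rewrite E in H1.
    unfold Rabs in H1; destruct Rcase_abs in H1; lra. }
  assert (Hqn : q <> 0). { intro E. rewrite E in Hre. simpl in Hre. lra. }
  assert (Hqq : q * q = prodC N (fun i => 1 + D * a i)).
  { unfold q. replace (W (t + tau)%R / W t * (W (t + tau)%R / W t)) with
      ((W (t + tau)%R * W (t + tau)%R) / (W t * W t)) by (field; auto).
    rewrite !Hsq by auto. replace (s (t + tau)%R) with (s t + D) by (unfold D; ring).
    rewrite bp_shift by (intros; apply Hav; auto). unfold a. field.
    apply (branchpoly_nz N u (s t)). intros i Hi. apply Hav; auto. }
  set (w := q * q - 1).
  assert (Hw1 : Cmod (w - D * S) <= C2 * Cmod D ^ 2) by (unfold w; rewrite Hqq; apply Hprod; auto).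
  assert (Hw2 : Cmod w <= (C2 + Sb) * Cmod D).
  { replace w with ((w - D * S) + D * S) by ring. eapply Rle_trans. apply Cmod_triangle.
    rewrite Cmod_mult. fold Sb. pose proof (Cmod_ge_0 D).
    assert (C2 * Cmod D ^ 2 <= C2 * Cmod D) by (apply Rmult_le_compat_l; nra). nra. }
  assert (Hzq : Cmod (zpowC q n - 1 - IZR n * w / 2) <= Mn * Cmod w ^ 2).
  { apply Hzp. unfold w; ring. auto. lra. }
  assert (H1b : 1/2 <= Cmod (1 + D * b)).
  { pose proof (Cmod_rev 1 (- (D * b))). rewrite Cmod_1, Cmod_opp, Cmod_mult in H1.
    replace (1 - - (D * b)) with (1 + D * b) in H1 by ring. fold bb in H1. lra. }
  assert (H1bn : 1 + D * b <> 0). { intro E. rewrite E, Cmod_0 in H1b. lra. }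
  assert (EW : W (t + tau)%R = W t * q) by (unfold q; field; auto).
  assert (Eden : s (t + tau)%R - u k = d * (1 + D * b)) by (unfold D, b, d; field; auto).
  rewrite EW, zpowC_mult by auto. fold X. rewrite Eden. fold d.
  replace (X * zpowC q n / (d * (1 + D * b)) - X / d - tau * (X / d * s' t * c))
    with (X / d * (((zpowC q n - 1 - IZR n * w / 2) + IZR n / 2 * (w - D * S) - D * D * b * c) / (1 + D * b)
                   + (D - tau * s' t) * c))
    by (unfold c; field; auto).
  rewrite Cmod_mult.
  assert (HX : Cmod (X / d) <= A) by (unfold A; lra).
  assert (Hnum : Cmod ((zpowC q n - 1 - IZR n * w / 2) + IZR n / 2 * (w - D * S) - D * D * b * c) <= K * Cmod D ^ 2).
  { eapply Rle_trans. apply Cmod_tri_minus. eapply Rle_trans. apply Rplus_le_compat_r. apply Cmod_triangle.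
    rewrite !Cmod_mult. fold bb.
    assert (Cmod w ^ 2 <= (C2 + Sb) ^ 2 * Cmod D ^ 2).
    { rewrite <- Rpow_mult_distr. apply pow_incr. split. apply Cmod_ge_0. auto. }
    assert (Mn * Cmod w ^ 2 <= Mn * ((C2 + Sb) ^ 2 * Cmod D ^ 2)) by (apply Rmult_le_compat_l; lra).
    assert (Cmod (IZR n / 2) * Cmod (w - D * S) <= Cmod (IZR n / 2) * (C2 * Cmod D ^ 2))
      by (apply Rmult_le_compat_l; [apply Cmod_ge_0 | auto]).
    unfold K. nra. }
  assert (Hfrac : Cmod (((zpowC q n - 1 - IZR n * w / 2) + IZR n / 2 * (w - D * S) - D * D * b * c) / (1 + D * b))
            <= 2 * (K * Cmod D ^ 2)).
  { assert (Hinv : / Cmod (1 + D * b) <= 2).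
    { replace 2%R with (/ (1/2))%R by field. apply Rinv_le_contravar; lra. }
    rewrite Cmod_div by auto. unfold Rdiv. apply Rle_trans with (K * Cmod D ^ 2 * 2)%R.
    apply Rmult_le_compat. apply Cmod_ge_0. apply Rlt_le, Rinv_0_lt_compat; lra. auto. auto. lra. }
  assert (Hlin : Cmod ((D - tau * s' t) * c) <= e1 * Rabs tau * cc).
  { rewrite Cmod_mult. apply Rmult_le_compat; auto using Cmod_ge_0. unfold cc; lra. }
  assert (HKD : 2 * (K * Cmod D ^ 2) <= 2 * K * sp ^ 2 * Rabs tau ^ 2).
  { assert (Cmod D ^ 2 <= (sp * Rabs tau) ^ 2) by (apply pow_incr; split; [apply Cmod_ge_0 | auto]).
    rewrite Rpow_mult_distr in H1. nra. }
  assert (Htot : Cmod (((zpowC q n - 1 - IZR n * w / 2) + IZR n / 2 * (w - D * S) - D * D * b * c) / (1 + D * b)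
                   + (D - tau * s' t) * c) <= 2 * K * sp ^ 2 * Rabs tau ^ 2 + e1 * Rabs tau * cc).
  { eapply Rle_trans. apply Cmod_triangle. lra. }
  apply Rle_trans with (A * (2 * K * sp ^ 2 * Rabs tau ^ 2 + e1 * Rabs tau * cc))%R.
  apply Rmult_le_compat; auto using Cmod_ge_0.
  assert (E1 : A * (2 * K * sp ^ 2 * Rabs tau ^ 2) <= eps / 2 * Rabs tau).
  { replace (A * (2 * K * sp ^ 2 * Rabs tau ^ 2))%R with ((A * (2 * K * sp ^ 2) * Rabs tau) * Rabs tau)%R by ring.
    apply Rmult_le_compat_r; auto.
    apply Rle_trans with (A * (2 * K * sp ^ 2 + 1) * dE)%R.
    assert (0 <= 2 * K * sp ^ 2) by (apply Rmult_le_pos; [lra| apply pow2_ge_0]).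
    apply Rmult_le_compat. apply Rmult_le_pos; lra. auto. apply Rmult_le_compat_l; lra. lra.
    unfold dE. right. field. split; nra. }
  assert (E2 : A * (e1 * Rabs tau * cc) <= eps / 2 * Rabs tau).
  { assert (e1 <= eps / (2 * A * cc)) by apply Rmin_r.
    replace (A * (e1 * Rabs tau * cc))%R with ((A * cc * e1) * Rabs tau)%R by ring.
    apply Rmult_le_compat_r; auto.
    apply Rle_trans with (A * cc * (eps / (2 * A * cc)))%R. apply Rmult_le_compat_l; nra.
    right. field. split; lra. }
  lra.
Qed.

Lemma ccont_end0 (g : R -> C) : ccont (fun x => g (cl x)) 0%R ->
  forall eps, 0 < eps -> exists d, 0 < d /\ forall t, 0 < t < d -> Cmod (g t - g 0%R) < eps.
Proof.
  intros H e He. destruct (H e He) as [d [Hd Hb]]. exists (Rmin d 1). split. apply Rmin_pos; lra.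
  intros t Ht. pose proof (Rmin_l d 1). pose proof (Rmin_r d 1).
  specialize (Hb t). rewrite (cl_id t), (cl_id 0%R) in Hb by lra. apply Hb. rewrite Rminus_0_r, Rabs_right; lra.
Qed.

Lemma ccont_end1 (g : R -> C) : ccont (fun x => g (cl x)) 1%R ->
  forall eps, 0 < eps -> exists d, 0 < d /\ forall t, 1 - d < t < 1 -> Cmod (g t - g 1%R) < eps.
Proof.
  intros H e He. destruct (H e He) as [d [Hd Hb]]. exists (Rmin d 1). split. apply Rmin_pos; lra.
  intros t Ht. pose proof (Rmin_l d 1). pose proof (Rmin_r d 1).
  specialize (Hb t). rewrite (cl_id t), (cl_id 1%R) in Hb by lra. apply Hb. rewrite Rabs_left; lra.
Qed.

Lemma cycle_closed N n U (s s' : R -> C) (Vm : (nat -> C) -> R -> C) u k :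
  openN N U -> U u -> (k < N)%nat ->
  (forall t, is_derive s t (s' t)) -> (forall t, continuous s' t) ->
  (forall u t i, U u -> 0 <= t <= 1 -> (i < N)%nat -> s t <> u i) ->
  (forall u t, U u -> 0 <= t <= 1 -> Vm u t * Vm u t = branchpoly N u (s t)) ->
  Vm u 0%R = Vm u 1%R -> s 0%R = s 1%R ->
  jcont N U Vm ->
  sumC N (fun j => RInt (V:=C_R_CompleteNormedModule) (Dfun n s s' (Vm u) u k j) 0 1) = 0.
Proof.
  intros HU Hu Hk Hs Hs' Hav Hsq HV01 Hs01 Hjc.
  assert (Hsc : forall t, ccont s t) by (apply (deriv_ccont s s'); auto).
  assert (Hs'c : forall t, ccont s' t) by (intros; apply continuous_ccont; auto).
  set (W := Vm u).
  assert (HWc : forall t, 0 <= t <= 1 -> ccont01 W t) by (apply jcont_t with N U; auto).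
  assert (HWn : forall t, 0 <= t <= 1 -> W t <> 0).
  { intros t Ht E. apply (branchpoly_nz N u (s t)). intros i Hi. apply Hav; auto.
    rewrite <- Hsq by auto. fold W. rewrite E. ring. }
  assert (Hex : forall j, (j < N)%nat -> ex_RInt (V:=C_R_NormedModule) (Dfun n s s' W u k j) 0 1).
  { intros j Hj. apply ex_RInt_cl. apply Dfun_ccont; auto; intros; apply Hav; auto. }
  rewrite <- (proj2 (RInt_sumC N (fun j => Dfun n s s' W u k j) Hex)).
  set (f := fun x => zpowC (W x) n / (s x - u k)).
  set (df := fun x => zpowC (W x) n / (s x - u k) * s' x *
                (IZR n / 2 * sumC N (fun i => / (s x - u i)) - / (s x - u k))).
  assert (Hdfc : forall t, ccont (fun x => df (cl x)) t).
  { intros t. unfold df.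
    apply (ccont_mult (fun x => zpowC (W (cl x)) n / (s (cl x) - u k) * s' (cl x))
             (fun x => IZR n / 2 * sumC N (fun i => / (s (cl x) - u i)) - / (s (cl x) - u k))).
    apply integrand_ccont; auto; intros; apply Hav; auto.
    apply (ccont_minus (fun x => IZR n / 2 * sumC N (fun i => / (s (cl x) - u i))) (fun x => / (s (cl x) - u k))).
    apply (ccont_mult (fun _ => IZR n / 2) (fun x => sumC N (fun i => / (s (cl x) - u i)))). apply ccont_const.
    apply (ccont_sumC N (fun i x => / (s (cl x) - u i))). intros i Hi.
    apply (ccont_inv (fun x => s (cl x) - u i)). apply Cminus_eq_contra, Hav; auto using cl_in.
    apply (ccont_minus (fun x => s (cl x)) (fun _ => u i)). apply ccont_cl; auto. apply ccont_const.
    apply (ccont_inv (fun x => s (cl x) - u k)). apply Cminus_eq_contra, Hav; auto using cl_in.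
    apply (ccont_minus (fun x => s (cl x)) (fun _ => u k)). apply ccont_cl; auto. apply ccont_const. }
  assert (Hfc : forall t, ccont (fun x => f (cl x)) t).
  { intros t. unfold f.
    apply (ccont_mult (fun x => zpowC (W (cl x)) n) (fun x => / (s (cl x) - u k))).
    apply (ccont_zpowC (fun x => W (cl x))). apply HWn, cl_in. apply ccont01_cl; auto.
    apply (ccont_inv (fun x => s (cl x) - u k)). apply Cminus_eq_contra, Hav; auto using cl_in.
    apply (ccont_minus (fun x => s (cl x)) (fun _ => u k)). apply ccont_cl; auto. apply ccont_const. }
  assert (Hexdf : ex_RInt (V:=C_R_NormedModule) df 0 1) by (apply ex_RInt_cl; auto).
  destruct (ccont_bound df Hdfc) as [M [HM HMb]].
  assert (Hftc : RInt (V:=C_R_CompleteNormedModule) df 0 1 = f 1%R - f 0%R).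
  { apply (ftc01 f df M); auto.
    - intros t Ht. unfold f, df.
      apply t_deriv; [auto | auto | auto | intros t0 Ht0 i Hi; apply Hav; auto | intros t0 Ht0; apply Hsq; auto | apply HWc; lra].
    - intros t Ht. apply ccont_cl_inner; auto.
    - apply ccont_end0; auto.
    - apply ccont_end1; auto. }
  assert (Hf01 : f 1%R = f 0%R) by (unfold f, W; rewrite HV01, Hs01; reflexivity).
  rewrite (RInt_ext (V:=C_R_CompleteNormedModule) _ (fun t => RtoC (-1) * df t)).
  - rewrite RInt_Cmult by auto. rewrite Hftc, Hf01. ring.
  - intros x Hx. unfold Dfun, df.
    rewrite (sumC_lin N _ (- IZR n / 2) (fun j => / (s x - u j)) (fun j => if Nat.eqb j k then / (s x - u k) else 0)).
    rewrite sumC_if. replace (Nat.ltb k N) with true by (symmetry; apply Nat.ltb_lt; auto).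
    match goal with |- ?a = ?b => change (@eq C a b) end. replace (RtoC (-1)) with (- RtoC 1) by (apply injective_projections; simpl; lra). field.
    rewrite Rmin_left, Rmax_right in Hx by lra. apply Cminus_eq_contra, Hav; auto; lra.
Qed.

Lemma dC_val (F : C -> C) z a b :
  is_derive (K:=C_AbsRing) (V:=C_NormedModule) F z a -> a = b -> is_derive (K:=C_AbsRing) (V:=C_NormedModule) F z b.
Proof. intros H ->. exact H. Qed.

Lemma dC_ext (F G : C -> C) z a : (forall w, F w = G w) ->
  is_derive (K:=C_AbsRing) (V:=C_NormedModule) F z a -> is_derive (K:=C_AbsRing) (V:=C_NormedModule) G z a.
Proof. intros E H. apply (is_derive_ext (K:=C_AbsRing) (V:=C_NormedModule) F G z a E H). Qed.

Lemma dC_const (a z : C) : is_derive (K:=C_AbsRing) (V:=C_NormedModule) (fun _ => a) z (RtoC 0).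
Proof. apply (is_derive_const (K:=C_AbsRing) (V:=C_NormedModule)). Qed.

Lemma dC_plus (F G : C -> C) z a b :
  is_derive (K:=C_AbsRing) (V:=C_NormedModule) F z a -> is_derive (K:=C_AbsRing) (V:=C_NormedModule) G z b ->
  is_derive (K:=C_AbsRing) (V:=C_NormedModule) (fun w => F w + G w) z (a + b).
Proof. intros. apply (is_derive_plus (K:=C_AbsRing) (V:=C_NormedModule) F G); auto. Qed.

Lemma dC_cmul (F : C -> C) z a c :
  is_derive (K:=C_AbsRing) (V:=C_NormedModule) F z a ->
  is_derive (K:=C_AbsRing) (V:=C_NormedModule) (fun w => c * F w) z (c * a).
Proof.
  intros H. unfold is_derive in *.
  pose proof (filterdiff_scal_r_fct (K:=C_AbsRing) (U:=AbsRing_NormedModule C_AbsRing) (V:=C_NormedModule)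
     (F:=locally z) c F (fun y => scal y a) Cmult_comm H) as H1.
  apply (filterdiff_ext_lin _ _ _ H1). intros y. simpl. change (c * (y * a) = y * (c * a)). ring.
Qed.

Lemma dC_sumC M (F : nat -> C -> C) (d : nat -> C) z :
  (forall m, (m < M)%nat -> is_derive (K:=C_AbsRing) (V:=C_NormedModule) (F m) z (d m)) ->
  is_derive (K:=C_AbsRing) (V:=C_NormedModule) (fun w => sumC M (fun m => F m w)) z (sumC M d).
Proof.
  induction M; intros H. simpl. apply dC_const.
  simpl. apply (dC_plus (fun w => sumC M (fun m => F m w)) (F M)). apply IHM; intros; apply H; lia. apply H; lia.
Qed.

Lemma m11_msum M f : m11 (msum M f) = sumC M (fun j => m11 (f j)).
Proof. induction M. reflexivity. simpl. rewrite IHM. reflexivity. Qed.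
Lemma m12_msum M f : m12 (msum M f) = sumC M (fun j => m12 (f j)).
Proof. induction M. reflexivity. simpl. rewrite IHM. reflexivity. Qed.
Lemma m21_msum M f : m21 (msum M f) = sumC M (fun j => m21 (f j)).
Proof. induction M. reflexivity. simpl. rewrite IHM. reflexivity. Qed.
Lemma m22_msum M f : m22 (msum M f) = sumC M (fun j => m22 (f j)).
Proof. induction M. reflexivity. simpl. rewrite IHM. reflexivity. Qed.

Lemma sumC_ext M (f g : nat -> C) : (forall j, (j < M)%nat -> f j = g j) -> sumC M f = sumC M g.
Proof. induction M; intros H. reflexivity. simpl. rewrite IHM by (intros; apply H; lia). rewrite H by lia. reflexivity. Qed.

Lemma sumC_zero M (f : nat -> C) : (forall j, (j < M)%nat -> f j = 0) -> sumC M f = 0.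
Proof. induction M; intros H. reflexivity. simpl. rewrite IHM by (intros; apply H; lia). rewrite H by lia. ring. Qed.

Lemma sumC_plus M (f g : nat -> C) : sumC M (fun j => f j + g j) = sumC M f + sumC M g.
Proof. induction M. simpl. ring. simpl. rewrite IHM. ring. Qed.

Lemma sumC_cmul M c (f : nat -> C) : sumC M (fun j => c * f j) = c * sumC M f.
Proof. induction M. simpl. ring. simpl. rewrite IHM. ring. Qed.

Lemma sumC_swap M P (F : nat -> nat -> C) :
  sumC M (fun j => sumC P (fun m => F j m)) = sumC P (fun m => sumC M (fun j => F j m)).
Proof.
  induction M. simpl. symmetry. apply sumC_zero. reflexivity.
  simpl. rewrite IHM. rewrite <- sumC_plus. reflexivity.
Qed.

Lemma sumC_split_k M k (f : nat -> C) : (k < M)%nat ->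
  sumC M f = f k + sumC M (fun j => if Nat.eqb j k then 0 else f j).
Proof.
  induction M; intros H. lia. simpl. destruct (Nat.eq_dec k M) as [->|Hk].
  - rewrite Nat.eqb_refl. replace (sumC M (fun j => if Nat.eqb j M then 0 else f j)) with (sumC M f). ring.
    apply sumC_ext. intros j Hj. destruct (Nat.eqb_spec j M); try lia. reflexivity.
  - rewrite IHM by lia. replace (Nat.eqb M k) with false by (symmetry; apply Nat.eqb_neq; lia). ring.
Qed.

Lemma sumC_lin2 M (c x y : nat -> C) (al : C) :
  sumC M (fun m => c m * (al * (x m - y m))) = al * (sumC M (fun m => c m * x m) - sumC M (fun m => c m * y m)).
Proof. induction M. simpl. ring. simpl. rewrite IHM. ring. Qed.

Ltac ceq := match goal with |- ?a = ?b => change (@eq C a b) end.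

Theorem corollary1
  (g : nat) (n : Z) (U : (nat -> C) -> Prop)
  (sigma dsigma : nat -> R -> C) (V : nat -> (nat -> C) -> R -> C)
  (c : nat -> C) :
  (1 <= g)%nat ->
  n <> 0%Z ->
  openN (2 * g + 1) U ->
  (forall u, U u -> forall i j, (i < 2 * g + 1)%nat -> (j < 2 * g + 1)%nat ->
     i <> j -> u i <> u j) ->
  (forall k, (k < 2 * g)%nat ->
     (forall t, is_derive (sigma k) t (dsigma k t)) /\
     (forall t, continuous (dsigma k) t) /\
     sigma k 0%R = sigma k 1%R) ->
  (forall k u t i, (k < 2 * g)%nat -> U u -> (0 <= t <= 1)%R -> (i < 2 * g + 1)%nat ->
     sigma k t <> u i) ->
  (forall k u t, (k < 2 * g)%nat -> U u -> (0 <= t <= 1)%R ->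
     V k u t * V k u t = branchpoly (2 * g + 1) u (sigma k t)) ->
  (forall k u, (k < 2 * g)%nat -> U u -> V k u 0%R = V k u 1%R) ->
  (forall k u t, (k < 2 * g)%nat -> U u -> (0 <= t <= 1)%R ->
     forall eps : R, (0 < eps)%R -> exists delta : R, (0 < delta)%R /\
       forall u' t', U u' -> (0 <= t' <= 1)%R ->
         (forall i, (i < 2 * g + 1)%nat -> (Cmod (u' i - u i) < delta)%R) ->
         (Rabs (t' - t) < delta)%R ->
         (Cmod (V k u' t' - V k u t) < eps)%R) ->
  forall u, U u ->
    (forall j k, (j < 2 * g + 1)%nat -> (k < 2 * g + 1)%nat -> k <> j ->
       mderiv (fun z => Amat g n c sigma dsigma V (upd u k z) j) (u k)
         (mscale (/ (u k - u j))
            (comm (Amat g n c sigma dsigma V u k) (Amat g n c sigma dsigma V u j)))) /\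
    (forall k, (k < 2 * g + 1)%nat ->
       mderiv (fun z => Amat g n c sigma dsigma V (upd u k z) k) (u k)
         (mopp (msum (2 * g + 1) (fun j =>
            if Nat.eqb j k then mzero
            else mscale (/ (u k - u j))
                   (comm (Amat g n c sigma dsigma V u k) (Amat g n c sigma dsigma V u j)))))) /\
    (forall k, (k < 2 * g + 1)%nat ->
       mderiv (fun z => Ainf g n c sigma dsigma V (upd u k z)) (u k) mzero).
Proof.
  intros Hg Hn HU Hdist Hsig Hav Hsq Hcl Hcont u Hu.
  set (N := (2 * g + 1)%nat) in *.
  assert (Hjc : forall m, (m < 2 * g)%nat -> jcont N U (V m)).
  { intros m Hm u0 t Hu0 Ht. apply Hcont; auto. }
  set (Dk := fun k j => sumC (2 * g) (fun m => c m *
        RInt (V:=C_R_CompleteNormedModule) (Dfun n (sigma m) (dsigma m) (V m u) u k j) 0 1)).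
  set (a := fun i => a_coef g n c sigma dsigma V u i).
  assert (Ha : forall j k, (j < N)%nat -> (k < N)%nat ->
     is_derive (K:=C_AbsRing) (V:=C_NormedModule) (fun z => a_coef g n c sigma dsigma V (upd u k z) j) (u k) (Dk k j)).
  { intros j k Hj Hk. unfold a_coef, Dk.
    apply (dC_sumC (2 * g) (fun m z => c m * cyc_int (sigma m) (dsigma m) (V m (upd u k z))
                                            (fun x v => zpowC v n / (x - upd u k z j)))).
    intros m Hm. apply dC_cmul. destruct (Hsig m Hm) as [Hs1 [Hs2 Hs3]].
    apply (cycle_deriv N n U); auto.
    }
  assert (Hoff : forall j k, (j < N)%nat -> (k < N)%nat -> k <> j ->
     Dk k j = (- IZR n / 2) / (u k - u j) * (a k - a j)).
  { intros j k Hj Hk Hkj. unfold Dk, a, a_coef, cyc_int.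
    assert (Hujk : u k - u j <> 0) by (apply Cminus_eq_contra; apply Hdist; auto).
    rewrite <- sumC_lin2. apply sumC_ext. intros m Hm. f_equal.
    destruct (Hsig m Hm) as [Hs1 [Hs2 Hs3]].
    assert (Hsc : forall t, ccont (sigma m) t) by (apply (deriv_ccont (sigma m) (dsigma m)); auto).
    assert (Hs'c : forall t, ccont (dsigma m) t) by (intros; apply continuous_ccont; auto).
    assert (HWn : forall t, 0 <= t <= 1 -> V m u t <> 0).
    { intros t Ht E. apply (branchpoly_nz N u (sigma m t)). intros i Hi. apply Hav; auto.
      rewrite <- Hsq by auto. rewrite E. ring. }
    assert (Hexi : forall i, (i < N)%nat -> ex_RInt (V:=C_R_NormedModule)
          (fun t => zpowC (V m u t) n / (sigma m t - u i) * dsigma m t) 0 1).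
    { intros i Hi. apply ex_RInt_cl. apply integrand_ccont; try (apply jcont_t with N U; now auto); try (intros t Ht; apply Hav; now auto); auto. }
    pose proof (RInt_minus (V:=C_R_CompleteNormedModule)
       (fun t => zpowC (V m u t) n / (sigma m t - u k) * dsigma m t)
       (fun t => zpowC (V m u t) n / (sigma m t - u j) * dsigma m t) 0 1 (Hexi k Hk) (Hexi j Hj)) as E.
    change (minus ?x ?y) with (x - y) in E. rewrite <- E.
    rewrite <- RInt_Cmult.
    2: { apply (ex_RInt_minus (V:=C_R_NormedModule)); apply Hexi; auto. }
    apply (RInt_ext (V:=C_R_CompleteNormedModule)). intros x Hx.
    rewrite Rmin_left, Rmax_right in Hx by lra.
    assert (H1 : sigma m x - u k <> 0) by (apply Cminus_eq_contra; apply Hav; auto; lra).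
    assert (H2 : sigma m x - u j <> 0) by (apply Cminus_eq_contra; apply Hav; auto; lra).
    unfold Dfun. replace (Nat.eqb j k) with false by (symmetry; apply Nat.eqb_neq; auto).
    change (minus ?p ?q) with (p - q). match goal with |- ?a = ?b => change (@eq C a b) end. field. auto. }
  assert (Hzero : forall k, (k < N)%nat -> sumC N (fun j => Dk k j) = 0).
  { intros k Hk. unfold Dk. rewrite sumC_swap. apply sumC_zero. intros m Hm.
    rewrite sumC_cmul. destruct (Hsig m Hm) as [Hs1 [Hs2 Hs3]].
    rewrite (cycle_closed N n U); auto. ring.
    }
  assert (Em1 : RtoC (-1) = - RtoC 1) by (apply injective_projections; simpl; lra).
  assert (Equart : RtoC (IZR n / 4) = RtoC (IZR n) / 4) by (apply RtoC_div; lra).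
  assert (Equart' : RtoC (- (IZR n / 4)) = - (RtoC (IZR n) / 4)) by (rewrite RtoC_opp, Equart; reflexivity).
  assert (Hent : forall j k, (j < N)%nat -> (k < N)%nat -> k <> j ->
     m11 (mscale (/ (u k - u j)) (comm (Amat g n c sigma dsigma V u k) (Amat g n c sigma dsigma V u j))) = 0 /\
     m12 (mscale (/ (u k - u j)) (comm (Amat g n c sigma dsigma V u k) (Amat g n c sigma dsigma V u j))) = Dk k j /\
     m21 (mscale (/ (u k - u j)) (comm (Amat g n c sigma dsigma V u k) (Amat g n c sigma dsigma V u j))) = 0 /\
     m22 (mscale (/ (u k - u j)) (comm (Amat g n c sigma dsigma V u k) (Amat g n c sigma dsigma V u j))) = 0).
  { intros j k Hj Hk Hkj.
    assert (Hujk : u k - u j <> 0) by (apply Cminus_eq_contra; apply Hdist; auto).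
    rewrite (Hoff j k Hj Hk Hkj).
    unfold mscale, comm, madd, mopp, mmul, mscale, Amat. cbn [m11 m12 m21 m22].
    rewrite Em1, Equart, Equart'. fold (a k). fold (a j).
    repeat split; field; auto. }
  split; [|split].
  - intros j k Hj Hk Hkj. destruct (Hent j k Hj Hk Hkj) as [E11 [E12 [E21 E22]]].
    unfold mderiv. rewrite E11, E12, E21, E22. split; [|split; [|split]].
    + apply (dC_ext (fun _ => RtoC (IZR n / 4))). intros; reflexivity. apply dC_const.
    + apply (dC_ext (fun z => a_coef g n c sigma dsigma V (upd u k z) j)). intros; reflexivity. apply Ha; auto.
    + apply (dC_ext (fun _ => RtoC 0)). intros; reflexivity. apply dC_const.
    + apply (dC_ext (fun _ => RtoC (- (IZR n / 4)))). intros; reflexivity. apply dC_const.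
  - intros k Hk.
    set (Fj := fun j => if Nat.eqb j k then mzero else mscale (/ (u k - u j))
        (comm (Amat g n c sigma dsigma V u k) (Amat g n c sigma dsigma V u j))).
    unfold mderiv. unfold mopp, mscale. cbn [m11 m12 m21 m22].
    rewrite m11_msum, m12_msum, m21_msum, m22_msum.
    assert (Z11 : sumC N (fun j => m11 (Fj j)) = 0).
    { apply sumC_zero. intros j Hj. unfold Fj. destruct (Nat.eqb_spec j k). reflexivity. apply Hent; auto. }
    assert (Z21 : sumC N (fun j => m21 (Fj j)) = 0).
    { apply sumC_zero. intros j Hj. unfold Fj. destruct (Nat.eqb_spec j k). reflexivity. apply Hent; auto. }
    assert (Z22 : sumC N (fun j => m22 (Fj j)) = 0).
    { apply sumC_zero. intros j Hj. unfold Fj. destruct (Nat.eqb_spec j k). reflexivity. apply Hent; auto. }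
    assert (Z12 : sumC N (fun j => m12 (Fj j)) = sumC N (fun j => if Nat.eqb j k then 0 else Dk k j)).
    { apply sumC_ext. intros j Hj. unfold Fj. destruct (Nat.eqb_spec j k). reflexivity. apply Hent; auto. }
    rewrite Z11, Z12, Z21, Z22. split; [|split; [|split]].
    + apply (dC_ext (fun _ => RtoC (IZR n / 4))). intros; reflexivity.
      apply (dC_val _ _ (RtoC 0)). apply dC_const. ceq. ring.
    + apply (dC_ext (fun z => a_coef g n c sigma dsigma V (upd u k z) k)). intros; reflexivity.
      apply (dC_val _ _ (Dk k k)). apply Ha; auto.
      pose proof (Hzero k Hk) as HZ. rewrite (sumC_split_k N k) in HZ by auto.
      set (S' := sumC N (fun j => if Nat.eqb j k then 0 else Dk k j)) in *.
      assert (EDk : Dk k k = (Dk k k + S') - S') by ring. rewrite HZ in EDk.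
      ceq. rewrite Em1, EDk. ring.
    + apply (dC_ext (fun _ => RtoC 0)). intros; reflexivity.
      apply (dC_val _ _ (RtoC 0)). apply dC_const. ceq. ring.
    + apply (dC_ext (fun _ => RtoC (- (IZR n / 4)))). intros; reflexivity.
      apply (dC_val _ _ (RtoC 0)). apply dC_const. ceq. ring.
  - intros k Hk. unfold mderiv. split; [|split; [|split]].
    + apply (dC_ext (fun _ => RtoC (-1) * sumC N (fun _ => RtoC (IZR n / 4)))).
      intros w. unfold Ainf, mopp, mscale. cbn [m11]. rewrite m11_msum. reflexivity.
      apply dC_const.
    + apply (dC_ext (fun z => RtoC (-1) * sumC N (fun i => a_coef g n c sigma dsigma V (upd u k z) i))).
      intros w. unfold Ainf, mopp, mscale. cbn [m12]. rewrite m12_msum. reflexivity.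
      apply (dC_val _ _ (RtoC (-1) * sumC N (fun i => Dk k i))).
      apply dC_cmul. apply (dC_sumC N (fun i z => a_coef g n c sigma dsigma V (upd u k z) i)).
      intros i Hi. apply Ha; auto.
      rewrite Hzero by auto. change (RtoC (-1) * 0 = 0). ring.
    + apply (dC_ext (fun _ => RtoC (-1) * sumC N (fun _ => RtoC 0))).
      intros w. unfold Ainf, mopp, mscale. cbn [m21]. rewrite m21_msum. reflexivity.
      apply dC_const.
    + apply (dC_ext (fun _ => RtoC (-1) * sumC N (fun _ => RtoC (- (IZR n / 4))))).
      intros w. unfold Ainf, mopp, mscale. cbn [m22]. rewrite m22_msum. reflexivity.
      apply dC_const.
Qed.
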